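(* Let $s_0\in(0,1)$, $\tau,\eta,\lambda>0$, and let $(I_j^0)_{j\in\mathbb{Z}}$ be a finitely supported sequence with $I_j^0\in[0,1)$ for all $j$ and $I_j^0>0$ for at least one $j$. Let $f(v):=s_0(1-e^{-\tau v})-\eta v$, $\mathscr{R}_0:=s_0\tau/\eta$, and assume $\mathscr{R}_0>1$. Define $$c_*:=\min_{\gamma>0}\frac{\eta(\mathscr{R}_0-1)+\lambda(e^{-\gamma}-2+e^{\gamma})}{\gamma}>0.$$ Let $(\mathcal{I}_j^\infty)_{j\in\mathbb{Z}}$ be the unique positive bounded solution of $0=f(\mathcal{I}_j)+I_j^0+\lambda(\mathcal{I}_{j-1}-2\mathcal{I}_j+\mathcal{I}_{j+1})$, $j\in\mathbb{Z}$, and let $(\mathcal{I}_j(t))_{j\in\mathbb{Z}}$ solve $$\mathcal{I}_j'(t)=f(\mathcal{I}_j(t))+I_j^0+\lambda\left(\mathcal{I}_{j-1}(t)-2\mathcal{I}_j(t)+\mathcal{I}_{j+1}(t)\right),\quad j\in\mathbb{Z},\ t>0,\qquad \mathcal{I}_j(0)=0\ \ \forall j\in\mathbb{Z}.$$ Then: (i) for every $c\in(0,c_* )$, $\limsup_{t\to+\infty}\sup_{|j|\le ct}|\mathcal{I}_j(t)-\mathcal{I}_j^\infty|=0$; (ii) for every $c>c_*$, $\limsup_{t\to+\infty}\sup_{|j|\ge ct}|\mathcal{I}_j(t)|=0$. *)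

(* Defs.v *)
From Stdlib Require Import Reals ZArith.
From Coquelicot Require Import Coquelicot.
Open Scope R_scope.

Definition freac (s0 tau eta v : R) : R := s0 * (1 - exp (- tau * v)) - eta * v.

Definition repr0 (s0 tau eta : R) : R := s0 * tau / eta.

Definition cfun (s0 tau eta lam gamma : R) : R :=
  (eta * (repr0 s0 tau eta - 1) + lam * (exp (- gamma) - 2 + exp gamma)) / gamma.

Definition is_min_pos (g : R -> R) (c : R) : Prop :=
  (exists g0, 0 < g0 /\ g g0 = c) /\ (forall gam, 0 < gam -> c <= g gam).

Definition dlap (u : Z -> R) (j : Z) : R :=
  u (j - 1)%Z - 2 * u j + u (j + 1)%Z.

(* Main.v *)
Require Import Defs.
From Stdlib Require Import Reals ZArith.
From Coquelicot Require Import Coquelicot.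
Open Scope R_scope.
From Stdlib Require Import Lra Lia List.

Definition cont_nn (g : R -> R) (t : R) := forall eps, 0 < eps -> exists d, 0 < d /\
  forall u, 0 <= u -> Rabs (u - t) < d -> Rabs (g u - g t) < eps.

Definition clamp (T u : R) := Rmin T (Rmax 0 u).

Lemma clamp_in T u : 0 <= T -> 0 <= clamp T u <= T.
Proof. intros. unfold clamp, Rmin, Rmax. repeat destruct Rle_dec; lra. Qed.

Lemma clamp_id T u : 0 <= u <= T -> clamp T u = u.
Proof. intros. unfold clamp, Rmin, Rmax. repeat destruct Rle_dec; lra. Qed.

Lemma clamp_lip T u v : 0 <= T -> Rabs (clamp T u - clamp T v) <= Rabs (u - v).
Proof.
  intros. unfold clamp, Rmin, Rmax. repeat destruct Rle_dec;
  unfold Rabs; repeat destruct Rcase_abs; lra.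
Qed.

Lemma cont_pt_of_eps (f : R -> R) x :
  (forall eps, 0 < eps -> exists d, 0 < d /\ forall u, Rabs (u - x) < d -> Rabs (f u - f x) < eps) ->
  continuity_pt f x.
Proof.
  intros H. apply continuity_pt_locally. intros eps.
  destruct (H eps (cond_pos eps)) as [d [Hd Hu]].
  exists (mkposreal d Hd). intros y Hy. apply Hu. exact Hy.
Qed.

Lemma eps_of_cont_pt (f : R -> R) x : continuity_pt f x ->
  forall eps, 0 < eps -> exists d, 0 < d /\ forall u, Rabs (u - x) < d -> Rabs (f u - f x) < eps.
Proof.
  intros H eps He. rewrite continuity_pt_locally in H.
  destruct (H (mkposreal eps He)) as [d Hd].
  exists d. split; [apply cond_pos|]. intros u Hu. apply Hd. exact Hu.
Qed.

Lemma cont_nn_of_cont_pt g t : continuity_pt g t -> cont_nn g t.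
Proof.
  intros H eps He. destruct (eps_of_cont_pt g t H eps He) as [d [Hd Hu]].
  exists d. split; auto.
Qed.

Lemma cont_clamp g T : 0 <= T -> (forall t, 0 <= t <= T -> cont_nn g t) ->
  forall c, continuity_pt (fun u => g (clamp T u)) c.
Proof.
  intros HT Hg c. apply cont_pt_of_eps. intros eps He.
  destruct (Hg (clamp T c) (clamp_in T c HT) eps He) as [d [Hd Hu]].
  exists d. split; auto. intros u Hu'.
  apply Hu. apply clamp_in; auto.
  eapply Rle_lt_trans; [apply clamp_lip; auto| exact Hu'].
Qed.

Lemma cont_clamp_self T c : 0 <= T -> continuity_pt (clamp T) c.
Proof.
  intros HT. apply cont_pt_of_eps. intros eps He. exists eps. split; auto.
  intros u Hu. eapply Rle_lt_trans; [apply clamp_lip; auto| exact Hu].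
Qed.

Lemma deriv_left_max g t0 d del : is_derive g t0 d -> 0 < del ->
  (forall u, t0 - del <= u <= t0 -> g u <= g t0) -> 0 <= d.
Proof.
  intros Hd Hdel Hm. apply is_derive_Reals in Hd.
  destruct (Rle_dec 0 d) as [P|P]; auto. exfalso. apply Rnot_le_lt in P.
  destruct (Hd (- d) ltac:(lra)) as [e He].
  set (h := - Rmin (e / 2) del).
  assert (Hh1 : h < 0).
  { unfold h. assert (0 < Rmin (e/2) del) by (apply Rmin_pos; generalize (cond_pos e); lra). lra. }
  assert (Hh2 : Rabs h < e).
  { unfold h. rewrite Rabs_Ropp. rewrite Rabs_right.
    - generalize (Rmin_l (e/2) del) (cond_pos e); lra.
    - apply Rle_ge. apply Rmin_glb; generalize (cond_pos e); lra. }
  specialize (He h ltac:(lra) Hh2).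
  assert (g (t0 + h) <= g t0).
  { apply Hm. generalize (Rmin_r (e/2) del); unfold h in *; lra. }
  set (q := (g (t0 + h) - g t0) / h) in *.
  assert (q * h = g (t0 + h) - g t0) by (unfold q; field; lra).
  assert (0 <= q) by nra.
  apply Rabs_def2 in He. lra.
Qed.

Lemma exp_mono x y : x <= y -> exp x <= exp y.
Proof. intros H. destruct (Rle_lt_or_eq_dec x y H) as [Q|Q]; [left; apply exp_increasing; auto| subst; lra]. Qed.

Lemma Rabs_def2b x a : Rabs x <= a -> - a <= x /\ x <= a.
Proof. unfold Rabs. destruct Rcase_abs; lra. Qed.

Lemma isd_minus (f g : R -> R) x df dg : is_derive f x df -> is_derive g x dg ->
  is_derive (fun u => f u - g u) x (df - dg).
Proof.
  intros H1 H2. generalize (is_derive_minus f g x df dg H1 H2). intro H.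
  eapply is_derive_ext; [|exact H]. intros; reflexivity.
Qed.

Lemma isd_const (c x : R) : is_derive (fun _ => c) x 0.
Proof. apply (is_derive_const c x). Qed.

Lemma isd_mult (f g : R -> R) x df dg : is_derive f x df -> is_derive g x dg ->
  is_derive (fun u => f u * g u) x (df * g x + f x * dg).
Proof.
  intros H1 H2. generalize (is_derive_mult f g x df dg H1 H2 (fun a b => Rmult_comm a b)). intro H.
  eapply is_derive_ext; [|exact H]. intros; reflexivity.
Qed.

Lemma isd_explin (a x : R) : is_derive (fun u => exp (a * u)) x (a * exp (a * x)).
Proof. auto_derive; auto. ring. Qed.

Lemma fin_max (h : Z -> R -> R) (T : R) (l : list Z) : 0 <= T -> l <> nil ->
  (forall j c, continuity_pt (h j) c) ->
  exists j0 t0, In j0 l /\ 0 <= t0 <= T /\ forall j t, In j l -> 0 <= t <= T -> h j t <= h j0 t0.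
Proof.
  intros HT Hl Hc. induction l as [|a l IH]; [congruence|].
  destruct (continuity_ab_maj (h a) 0 T HT (fun c _ => Hc a c)) as [ta [Hta Hta']].
  destruct l as [|b l'].
  - exists a, ta. split; [left; auto|]. split; auto.
    intros j t [<-|[]] Ht. apply Hta; auto.
  - destruct IH as [j1 [t1 [Hj1 [Ht1 Hm]]]]; [congruence|].
    destruct (Rle_dec (h a ta) (h j1 t1)).
    + exists j1, t1. split; [right; auto|]. split; auto.
      intros j t [<-|Hj] Ht; [specialize (Hta t Ht); lra| apply Hm; auto].
    + exists a, ta. split; [left; auto|]. split; auto.
      intros j t [<-|Hj] Ht; [apply Hta; auto| specialize (Hm j t Hj Ht); lra].
Qed.

Definition rangeZ (N : nat) : list Z := map (fun n => (Z.of_nat n - Z.of_nat N)%Z) (seq 0 (2*N+1)).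

Lemma rangeZ_in N j : (Z.abs j <= Z.of_nat N)%Z -> In j (rangeZ N).
Proof.
  intros H. unfold rangeZ. apply in_map_iff. exists (Z.to_nat (j + Z.of_nat N)).
  split; [lia|]. apply in_seq. lia.
Qed.

Lemma rangeZ_nil N : rangeZ N <> nil.
Proof. unfold rangeZ. replace (2 * N + 1)%nat with (S (2 * N)) by lia. simpl. congruence. Qed.

Lemma CP (z : Z -> R -> R) (T L lam : R) :
  0 <= T -> 0 <= L -> 0 < lam ->
  (forall j t, 0 <= t <= T -> cont_nn (z j) t) ->
  (exists B, forall j t, 0 <= t <= T -> z j t <= B) ->
  (forall j, z j 0 <= 0) ->
  (forall j t, 0 < t <= T -> 0 < z j t -> exists d, is_derive (z j) t d /\
      d <= L * z j t + lam * dlap (fun k => z k t) j) ->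
  forall j t, 0 <= t <= T -> z j t <= 0.
Proof.
  intros HT HL Hlam Hc [B0 HB] H0 Hd j1 t1 Ht1.
  destruct (Rle_dec (z j1 t1) 0) as [P|P]; auto. exfalso. apply Rnot_le_lt in P.
  set (B := Rmax B0 0).
  assert (HB' : forall j t, 0 <= t <= T -> z j t <= B).
  { intros j t Ht. specialize (HB j t Ht). unfold B. generalize (Rmax_l B0 0); lra. }
  assert (HB0 : 0 <= B) by (unfold B; apply Rmax_r).
  set (K := L + 2 * lam + 1).
  set (rho := fun j : Z => 1 + IZR j * IZR j).
  assert (Hrho : forall j, 1 <= rho j) by (intros; unfold rho; nra).
  set (e1 := exp (- K * t1)).
  assert (He1 : 0 < e1) by apply exp_pos.
  set (eps := z j1 t1 * e1 / (2 * rho j1)).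
  assert (Heps : 0 < eps).
  { unfold eps. specialize (Hrho j1). apply Rdiv_lt_0_compat; nra. }
  set (h := fun j t => z j (clamp T t) * exp (- K * clamp T t) - eps * rho j).
  assert (Hhc : forall j c, continuity_pt (h j) c).
  { intros j c. unfold h. apply continuity_pt_minus; [|apply continuity_pt_const; intros ? ?; auto].
    apply continuity_pt_mult.
    - apply (cont_clamp (z j) T HT). intros; apply Hc; auto.
    - change (fun t => exp (- K * clamp T t)) with (comp (fun x => exp (- K * x)) (clamp T)).
      apply continuity_pt_comp; [apply cont_clamp_self; auto|].
      apply derivable_continuous_pt. apply derivable_pt_comp.
      + apply derivable_pt_scal. apply derivable_pt_id.
      + apply derivable_pt_exp. }
  assert (Hhle : forall j t, 0 <= t <= T -> h j t <= B - eps * rho j).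
  { intros j t Ht. unfold h. rewrite clamp_id by auto.
    specialize (HB' j t Ht).
    assert (Hex : exp (- K * t) <= 1).
    { rewrite <- exp_0. apply exp_mono. assert (0 < K) by (unfold K; lra). nra. }
    assert (0 < exp (- K * t)) by apply exp_pos.
    destruct (Rle_dec 0 (z j t)); nra. }
  assert (Hh1 : 0 < h j1 t1).
  { unfold h. rewrite clamp_id by auto. fold e1.
    assert (eps * rho j1 = z j1 t1 * e1 / 2) by (unfold eps; specialize (Hrho j1); field; lra).
    assert (0 < z j1 t1 * e1) by (apply Rmult_lt_0_compat; auto). lra. }
  destruct (archimed (B / eps)) as [Har _].
  set (N := Z.to_nat (up (B / eps))).
  assert (HN : forall j, (Z.of_nat N < Z.abs j)%Z -> forall t, 0 <= t <= T -> h j t < 0).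
  { intros j Hj t Ht. eapply Rle_lt_trans; [apply Hhle; auto|].
    assert (IZR (up (B / eps)) <= IZR (Z.abs j)).
    { apply IZR_le. unfold N in Hj. lia. }
    assert (IZR (Z.abs j) <= IZR j * IZR j).
    { rewrite <- mult_IZR. apply IZR_le. nia. }
    assert (B / eps * eps = B) by (field; lra).
    unfold rho. nra. }
  destruct (fin_max h T (rangeZ N) HT (rangeZ_nil N) Hhc) as [j0 [t0 [_ [Ht0 Hmax]]]].
  assert (Hglob : forall j t, 0 <= t <= T -> h j t <= h j0 t0).
  { assert (Hj1 : h j1 t1 <= h j0 t0).
    { destruct (Z_le_gt_dec (Z.abs j1) (Z.of_nat N)).
      - apply Hmax; auto. apply rangeZ_in; auto.
      - specialize (HN j1 ltac:(lia) t1 Ht1). lra. }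
    intros j t Ht. destruct (Z_le_gt_dec (Z.abs j) (Z.of_nat N)).
    - apply Hmax; auto. apply rangeZ_in; auto.
    - specialize (HN j ltac:(lia) t Ht). lra. }
  assert (Hh0 : 0 < h j0 t0) by (specialize (Hglob j1 t1 Ht1); lra).
  set (e0 := exp (- K * t0)).
  assert (He0 : 0 < e0) by apply exp_pos.
  assert (Hh0' : h j0 t0 = z j0 t0 * e0 - eps * rho j0) by (unfold h; rewrite clamp_id by auto; reflexivity).
  assert (Hz0 : 0 < z j0 t0).
  { assert (0 < eps * rho j0) by (specialize (Hrho j0); nra).
    destruct (Rle_dec (z j0 t0) 0); [|lra]. nra. }
  assert (Ht0p : 0 < t0).
  { destruct (Req_dec t0 0) as [Q|Q]; [|lra]. rewrite Q in Hz0. specialize (H0 j0). lra. }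
  destruct (Hd j0 t0 ltac:(lra) Hz0) as [d [Hder Hdle]].
  assert (Hg : is_derive (fun u => z j0 u * exp (- K * u)) t0 (d * e0 + z j0 t0 * (- K * e0))).
  { apply (is_derive_mult (fun u => z j0 u) (fun u => exp (- K * u))); auto.
    - unfold e0. auto_derive; auto. ring.
    - intros; apply Rmult_comm. }
  assert (Hdpos : 0 <= d * e0 + z j0 t0 * (- K * e0)).
  { apply (deriv_left_max _ t0 _ t0 Hg Ht0p). intros u Hu.
    specialize (Hglob j0 u ltac:(lra)). unfold h in Hglob.
    rewrite (clamp_id T u) in Hglob by lra. rewrite (clamp_id T t0) in Hglob by lra. lra. }
  assert (HdK : K * z j0 t0 <= d).
  { assert (0 <= e0 * (d - K * z j0 t0)) by nra.
    apply Rmult_le_reg_l with e0; auto. nra. }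
  assert (Hp : h (j0 + 1)%Z t0 <= h j0 t0) by (apply Hglob; auto).
  assert (Hm : h (j0 - 1)%Z t0 <= h j0 t0) by (apply Hglob; auto).
  assert (Ep : h (j0 + 1)%Z t0 = z (j0 + 1)%Z t0 * e0 - eps * rho (j0 + 1)%Z) by (unfold h; rewrite clamp_id by auto; reflexivity).
  assert (Em : h (j0 - 1)%Z t0 = z (j0 - 1)%Z t0 * e0 - eps * rho (j0 - 1)%Z) by (unfold h; rewrite clamp_id by auto; reflexivity).
  rewrite Ep, Hh0' in Hp. rewrite Em, Hh0' in Hm.
  assert (Hrr : rho (j0 + 1)%Z + rho (j0 - 1)%Z - 2 * rho j0 = 2).
  { unfold rho. rewrite plus_IZR, minus_IZR. ring. }
  assert (Hlap : e0 * dlap (fun k => z k t0) j0 <= 2 * eps).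
  { unfold dlap. nra. }
  assert (Heps2 : eps < z j0 t0 * e0).
  { specialize (Hrho j0). assert (eps <= eps * rho j0) by nra. lra. }
  assert (e0 * d <= L * z j0 t0 * e0 + lam * (2 * eps)).
  { assert (e0 * d <= e0 * (L * z j0 t0 + lam * dlap (fun k => z k t0) j0)) by (apply Rmult_le_compat_l; lra).
    nra. }
  assert (e0 * (K * z j0 t0) <= e0 * d) by (apply Rmult_le_compat_l; lra).
  unfold K in *. nra.
Qed.

Lemma one_minus_exp_ge2 u : u * exp (- u) <= 1 - exp (- u).
Proof.
  generalize (exp_ineq1_le u); intro H1.
  assert (E : exp u * exp (- u) = 1) by (rewrite <- exp_plus; replace (u + - u) with 0 by ring; apply exp_0).
  assert (0 < exp (- u)) by apply exp_pos.
  assert (exp (-u) * (1 + u) <= exp (-u) * exp u) by (apply Rmult_le_compat_l; lra).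
  nra.
Qed.

Lemma gap_h a th : 0 < a -> 0 <= th <= 1 ->
  (a * a * exp (- a) / 2) * th * (1 - th) <= 1 - exp (- (a * th)) - th * (1 - exp (- a)).
Proof.
  intros Ha Hth.
  set (k := a * a * exp (- a) / 2).
  set (phi := fun x => 1 - exp (- (a * x)) - x * (1 - exp (- a)) - k * x * (1 - x)).
  set (dphi := fun x => a * exp (- (a * x)) - (1 - exp (- a)) - k * (1 - 2 * x)).
  assert (Hd : forall x, is_derive phi x (dphi x)).
  { intro x. unfold phi, dphi. auto_derive; auto. ring. }
  assert (Hc : forall x, continuity_pt phi x).
  { intro x. apply derivable_continuous_pt. exists (dphi x). apply is_derive_Reals. apply Hd. }
  assert (Hanti : forall x y, 0 <= x -> x <= y -> y <= 1 -> dphi y <= dphi x).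
  { intros x y Hx Hxy Hy. unfold dphi.
    assert (E : exp (- (a * y)) = exp (- (a * x)) * exp (- (a * (y - x)))).
    { rewrite <- exp_plus. f_equal. ring. }
    generalize (one_minus_exp_ge2 (a * (y - x))); intro H1.
    assert (E2 : exp (- (a * x)) * exp (- (a * (y - x))) = exp (- (a * y))) by (rewrite E; ring).
    assert (H3 : exp (- a) <= exp (- (a * y))).
    { destruct (Req_dec (- a) (- (a * y))) as [Q|Q]; [rewrite Q; lra|].
      left; apply exp_increasing. nra. }
    assert (0 < exp (- (a * x))) by apply exp_pos.
    assert (H4 : exp (- (a * x)) * (a * (y - x) * exp (- (a * (y - x)))) <=
                 exp (- (a * x)) * (1 - exp (- (a * (y - x))))) by (apply Rmult_le_compat_l; lra).
    assert (H5 : a * (y - x) * exp (- (a * y)) <= exp (- (a * x)) - exp (- (a * y))).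
    { rewrite <- E2. nra. }
    assert (H6 : a * (y - x) * exp (- a) <= a * (y - x) * exp (- (a * y))).
    { apply Rmult_le_compat_l; nra. }
    unfold k. nra. }
  destruct (Rle_dec 0 (phi th)) as [P|P].
  - unfold phi in P. lra.
  - exfalso. apply Rnot_le_lt in P.
    assert (th0 : 0 < th).
    { destruct (Req_dec th 0) as [Q|Q]; [|lra]. subst. unfold phi in P.
      rewrite Rmult_0_r, Ropp_0, exp_0 in P. lra. }
    assert (th1 : th < 1).
    { destruct (Req_dec th 1) as [Q|Q]; [|lra]. subst. unfold phi in P.
      rewrite Rmult_1_r in P. lra. }
    destruct (MVT_gen phi 0 th dphi) as [c1 [Hc1 E1]].
    { intros; apply Hd. } { intros; apply Hc. }
    destruct (MVT_gen phi th 1 dphi) as [c2 [Hc2 E2]].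
    { intros; apply Hd. } { intros; apply Hc. }
    rewrite Rmin_left in Hc1 by lra. rewrite Rmax_right in Hc1 by lra.
    rewrite Rmin_left in Hc2 by lra. rewrite Rmax_right in Hc2 by lra.
    assert (phi 0 = 0) by (unfold phi; rewrite Rmult_0_r, Ropp_0, exp_0; ring).
    assert (phi 1 = 0) by (unfold phi; rewrite Rmult_1_r; ring).
    assert (dphi c2 <= dphi c1) by (apply Hanti; lra).
    assert (dphi c1 < 0).
    { destruct (Rle_dec 0 (dphi c1)); [|lra]. nra. }
    assert (0 < dphi c2).
    { destruct (Rle_dec (dphi c2) 0); [|lra]. nra. }
    lra.
Qed.

Lemma f_gap s0 tau eta V th : 0 < s0 -> 0 < tau -> 0 < V -> 0 <= th <= 1 ->
  (s0 * tau * tau * V * exp (- (tau * V)) / 2) * V * th * (1 - th) <=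
  freac s0 tau eta (th * V) - th * freac s0 tau eta V.
Proof.
  intros. generalize (gap_h (tau * V) th ltac:(nra) H2); intro G.
  unfold freac.
  replace (- tau * (th * V)) with (- (tau * V * th)) by ring.
  replace (- tau * V) with (- (tau * V)) by ring.
  assert (0 < s0 * ((tau * V) * (tau * V) * exp (- (tau * V)) / 2) * th * (1 - th) + 0 \/ True) by (right; auto).
  apply Rmult_le_compat_l with (r := s0) in G; [|lra].
  nra.
Qed.

Lemma one_minus_exp_le x : 1 - exp (- x) <= x.
Proof. generalize (exp_ineq1_le (- x)); lra. Qed.

Lemma one_minus_exp_ge x : 0 <= x -> x * (1 - x) <= 1 - exp (- x).
Proof.
  intros Hx. generalize (exp_ineq1_le x) (exp_ineq1_le (- x)); intros H1 H2.
  assert (E : exp x * exp (- x) = 1) by (rewrite <- exp_plus; replace (x + - x) with 0 by ring; apply exp_0).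
  assert (0 < exp (- x)) by apply exp_pos.
  (* 1 - e^{-x} >= x e^{-x} >= x (1-x) *)
  assert (x * exp (- x) <= 1 - exp (- x)).
  { assert (exp (-x) * (1 + x) <= exp (-x) * exp x) by (apply Rmult_le_compat_l; lra).
    nra. }
  nra.
Qed.

Lemma f_lip s0 tau eta M a b : 0 < s0 -> 0 < tau -> 0 < eta -> 0 <= M ->
  - M <= a <= b ->
  freac s0 tau eta b - freac s0 tau eta a <= s0 * tau * exp (tau * M) * (b - a).
Proof.
  intros Hs Ht He HM [Ha Hab]. unfold freac.
  assert (E : exp (- tau * b) = exp (- tau * a) * exp (- (tau * (b - a)))).
  { rewrite <- exp_plus. f_equal. ring. }
  rewrite E.
  generalize (one_minus_exp_le (tau * (b - a))); intro H1.
  assert (H2 : exp (- tau * a) <= exp (tau * M)).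
  { destruct (Req_dec (- tau * a) (tau * M)) as [Q|Q]; [rewrite Q; lra|].
    left; apply exp_increasing. nra. }
  assert (0 < exp (- tau * a)) by apply exp_pos.
  assert (0 <= 1 - exp (- (tau * (b - a)))).
  { assert (exp (- (tau * (b - a))) <= 1).
    { rewrite <- exp_0. destruct (Req_dec (- (tau * (b - a))) 0) as [Q|Q]; [rewrite Q; lra|].
      left; apply exp_increasing. nra. }
    lra. }
  assert (exp (- tau * a) * (1 - exp (- (tau * (b - a)))) <= exp (tau * M) * (tau * (b - a))).
  { apply Rmult_le_compat; try lra. }
  nra.
Qed.

Lemma f_upper s0 tau eta v : 0 < s0 -> 0 < tau -> 0 <= v ->
  freac s0 tau eta v <= (s0 * tau - eta) * v.
Proof.
  intros. unfold freac. generalize (one_minus_exp_le (tau * v)); intro Hq1.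
  replace (- tau * v) with (- (tau * v)) by ring. nra.
Qed.

Lemma f_lower_small s0 tau eta v : 0 < s0 -> 0 < tau -> 0 <= v ->
  (s0 * tau - eta - s0 * tau * tau * v) * v <= freac s0 tau eta v.
Proof.
  intros. unfold freac. generalize (one_minus_exp_ge (tau * v)); intro Hq.
  replace (- tau * v) with (- (tau * v)) by ring.
  assert (0 <= tau * v) by nra. specialize (Hq H2). nra.
Qed.

Lemma f_lower_neg s0 tau eta v : 0 < s0 -> 0 < tau -> 0 <= v ->
  - eta * v <= freac s0 tau eta v.
Proof.
  intros. unfold freac.
  assert (exp (- tau * v) <= 1).
  { rewrite <- exp_0. destruct (Req_dec (- tau * v) 0) as [Q|Q]; [rewrite Q; lra|].
    left; apply exp_increasing. nra. }
  nra.
Qed.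

Definition ODE s0 tau eta lam (I0 : Z -> R) (I : Z -> R -> R) := forall j t, 0 < t ->
  is_derive (I j) t (freac s0 tau eta (I j t) + I0 j + lam * dlap (fun k => I k t) j).

Lemma freac0 s0 tau eta : freac s0 tau eta 0 = 0.
Proof. unfold freac. rewrite Rmult_0_r, exp_0. ring. Qed.

Lemma cont_nn_minus g1 g2 t : cont_nn g1 t -> cont_nn g2 t -> cont_nn (fun u => g1 u - g2 u) t.
Proof.
  intros H1 H2 eps He. destruct (H1 (eps/2) ltac:(lra)) as [d1 [Hd1 H1']].
  destruct (H2 (eps/2) ltac:(lra)) as [d2 [Hd2 H2']].
  exists (Rmin d1 d2). split; [apply Rmin_pos; auto|]. intros u Hu Hut.
  specialize (H1' u Hu ltac:(generalize (Rmin_l d1 d2); lra)).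
  specialize (H2' u Hu ltac:(generalize (Rmin_r d1 d2); lra)).
  replace (g1 u - g2 u - (g1 t - g2 t)) with ((g1 u - g1 t) - (g2 u - g2 t)) by ring.
  eapply Rle_lt_trans; [apply Rabs_triang|]. rewrite Rabs_Ropp. lra.
Qed.

Lemma cont_nn_const c t : cont_nn (fun _ => c) t.
Proof. intros eps He. exists 1. split; [lra|]. intros. rewrite Rminus_eq_0, Rabs_R0. auto. Qed.

Lemma I_cont s0 tau eta lam I0 I : ODE s0 tau eta lam I0 I ->
  (forall j, filterlim (I j) (at_right 0) (locally 0)) -> (forall j, I j 0 = 0) ->
  forall j t, 0 <= t -> cont_nn (I j) t.
Proof.
  intros Hode Hc0 Hi j t Ht. destruct (Rle_lt_or_eq_dec 0 t Ht) as [P|P].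
  - apply cont_nn_of_cont_pt. apply derivable_continuous_pt.
    eexists. apply is_derive_Reals. apply Hode; auto.
  - subst t. intros eps He. specialize (Hc0 j). rewrite filterlim_locally in Hc0.
    destruct (Hc0 (mkposreal eps He)) as [d Hd].
    exists d. split; [apply cond_pos|]. intros u Hu Hud.
    destruct (Rle_lt_or_eq_dec 0 u Hu) as [Q|Q].
    + rewrite Hi. apply (Hd u Hud Q).
    + subst u. rewrite Rminus_eq_0, Rabs_R0. auto.
Qed.

Lemma dlap_minus (u v : Z -> R) j : dlap (fun k => u k - v k) j = dlap u j - dlap v j.
Proof. unfold dlap. ring. Qed.

Lemma I_nonneg s0 tau eta lam I0 I : 0 < s0 -> 0 < tau -> 0 < eta -> 0 < lam ->
  ODE s0 tau eta lam I0 I ->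
  (forall j, filterlim (I j) (at_right 0) (locally 0)) -> (forall j, I j 0 = 0) ->
  (forall T, exists M, forall j t, 0 <= t <= T -> Rabs (I j t) <= M) ->
  (forall j, 0 <= I0 j) ->
  forall j t, 0 <= t -> 0 <= I j t.
Proof.
  intros Hs Ht He Hl Hode Hc0 Hi Hb HI0 j t Htt.
  destruct (Hb t) as [M0 HM0]. set (M := Rmax M0 0).
  assert (HM : forall j u, 0 <= u <= t -> Rabs (I j u) <= M).
  { intros. specialize (HM0 j0 u H). unfold M. generalize (Rmax_l M0 0). lra. }
  assert (HM' : 0 <= M) by apply Rmax_r.
  assert (0 < s0 * tau * exp (tau * M)) by (generalize (exp_pos (tau * M)); intros; apply Rmult_lt_0_compat; nra).
  assert (HCP := CP (fun j u => 0 - I j u) t (s0 * tau * exp (tau * M)) lam Htt ltac:(lra) Hl).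
  cut (0 - I j t <= 0); [lra|]. apply HCP; try lra.
  - intros. apply cont_nn_minus; [apply cont_nn_const|]. apply (I_cont s0 tau eta lam I0); auto; lra.
  - exists M. intros j0 t0 Hjt. specialize (HM j0 t0 Hjt). apply Rabs_def2b in HM. lra.
  - intros. rewrite Hi. lra.
  - intros k u Hu Hz. eexists. split.
    + apply isd_minus; [apply isd_const| apply Hode; lra].
    + rewrite dlap_minus. unfold dlap at 1. 
      specialize (HM k u ltac:(lra)). apply Rabs_def2b in HM.
      generalize (f_lip s0 tau eta M (I k u) 0 Hs Ht He HM' ltac:(lra)). rewrite freac0.
      specialize (HI0 k). unfold zero; simpl. intros. unfold dlap in *. lra.
Qed.

Lemma I_le_V s0 tau eta lam I0 I V : 0 < s0 -> 0 < tau -> 0 < eta -> 0 < lam ->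
  ODE s0 tau eta lam I0 I ->
  (forall j, filterlim (I j) (at_right 0) (locally 0)) -> (forall j, I j 0 = 0) ->
  (forall T, exists M, forall j t, 0 <= t <= T -> Rabs (I j t) <= M) ->
  (forall j, 0 < V j) ->
  (forall j, 0 = freac s0 tau eta (V j) + I0 j + lam * dlap V j) ->
  forall j t, 0 <= t -> I j t <= V j.
Proof.
  intros Hs Ht He Hl Hode Hc0 Hi Hb HV HVe j t Htt.
  destruct (Hb t) as [M0 HM0].
  assert (HCP := CP (fun j u => I j u - V j) t (s0 * tau * exp (tau * 0)) lam Htt
     ltac:(rewrite Rmult_0_r, exp_0; nra) Hl).
  cut (I j t - V j <= 0); [lra|]. apply HCP; try lra.
  - intros. apply cont_nn_minus; [|apply cont_nn_const]. apply (I_cont s0 tau eta lam I0); auto; lra.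
  - exists M0. intros j0 t0 Hjt. specialize (HM0 j0 t0 Hjt). apply Rabs_def2b in HM0. specialize (HV j0). lra.
  - intros. rewrite Hi. specialize (HV j0). lra.
  - intros k u Hu Hz. eexists. split.
    + apply isd_minus; [apply Hode; lra| apply isd_const].
    + rewrite dlap_minus.
      generalize (f_lip s0 tau eta 0 (V k) (I k u) Hs Ht He ltac:(lra) ltac:(specialize (HV k); lra)).
      specialize (HVe k). unfold minus, plus, opp, zero; simpl. intros. nra.
Qed.

Lemma I_pos_step s0 tau eta lam I0 I j t : 0 < s0 -> 0 < tau -> 0 < eta -> 0 < lam ->
  ODE s0 tau eta lam I0 I -> (forall j u, 0 <= u -> 0 <= I j u) -> (forall j, 0 <= I0 j) ->
  0 < t ->
  (forall u, 0 < u -> 0 < I0 j + lam * (I (j - 1)%Z u + I (j + 1)%Z u)) ->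
  0 < I j t.
Proof.
  intros Hs Ht He Hl Hode Hnn HI0 Htp Hq.
  set (a := eta + 2 * lam).
  set (g := fun u => exp (a * u) * I j u).
  set (dg := fun u => a * exp (a * u) * I j u + exp (a * u) *
              (freac s0 tau eta (I j u) + I0 j + lam * dlap (fun k => I k u) j)).
  assert (Hd : forall u, 0 < u -> is_derive g u (dg u)).
  { intros u Hu. apply (isd_mult (fun u => exp (a * u)) (I j)); [apply isd_explin| apply Hode; auto]. }
  assert (Hdpos : forall u, 0 < u -> 0 < dg u).
  { intros u Hu. unfold dg. specialize (Hq u Hu).
    generalize (f_lower_neg s0 tau eta (I j u) Hs Ht (Hnn j u ltac:(lra))). intro Hf.
    assert (0 < exp (a * u)) by apply exp_pos.
    assert (0 < a * I j u + freac s0 tau eta (I j u) + I0 j + lam * dlap (fun k => I k u) j).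
    { unfold dlap, a. nra. }
    nra. }
  destruct (MVT_gen g (t/2) t dg) as [c [Hc E]].
  { intros x Hx. apply Hd. rewrite Rmin_left in Hx by lra. lra. }
  { intros x Hx. rewrite Rmin_left in Hx by lra. apply derivable_continuous_pt.
    eexists. apply is_derive_Reals. apply Hd. lra. }
  rewrite Rmin_left in Hc by lra. rewrite Rmax_right in Hc by lra.
  specialize (Hdpos c ltac:(lra)).
  assert (0 <= g (t/2)) by (unfold g; apply Rmult_le_pos; [left; apply exp_pos| apply Hnn; lra]).
  assert (0 < g t) by nra.
  unfold g in H0. assert (0 < exp (a * t)) by apply exp_pos. nra.
Qed.

Lemma I_pos s0 tau eta lam I0 I : 0 < s0 -> 0 < tau -> 0 < eta -> 0 < lam ->
  ODE s0 tau eta lam I0 I -> (forall j u, 0 <= u -> 0 <= I j u) -> (forall j, 0 <= I0 j) ->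
  (exists j, 0 < I0 j) ->
  forall j t, 0 < t -> 0 < I j t.
Proof.
  intros Hs Ht He Hl Hode Hnn HI0 [jp Hjp].
  assert (Hn : forall n : nat, forall j, Z.abs (j - jp) = Z.of_nat n -> forall t, 0 < t -> 0 < I j t).
  { induction n as [|n IH]; intros j Hj t Htp.
    - assert (j = jp) by lia. subst j.
      apply (I_pos_step s0 tau eta lam I0 I jp t); auto.
      intros u Hu. generalize (Hnn (jp - 1)%Z u ltac:(lra)) (Hnn (jp + 1)%Z u ltac:(lra)). nra.
    - apply (I_pos_step s0 tau eta lam I0 I j t); auto.
      intros u Hu. generalize (Hnn (j - 1)%Z u ltac:(lra)) (Hnn (j + 1)%Z u ltac:(lra)) (HI0 j). intros.
      destruct (Z_le_gt_dec j jp).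
      + specialize (IH (j + 1)%Z ltac:(lia) u Hu). nra.
      + specialize (IH (j - 1)%Z ltac:(lia) u Hu). nra. }
  intros j t Htp. apply (Hn (Z.to_nat (Z.abs (j - jp)))); auto. lia.
Qed.

Lemma dlap_refl (u : Z -> R) j : dlap (fun k => u (- k)%Z) j = dlap u (- j)%Z.
Proof.
  unfold dlap. replace (- (j - 1))%Z with (- j + 1)%Z by lia.
  replace (- (j + 1))%Z with (- j - 1)%Z by lia. ring.
Qed.

Lemma ODE_refl s0 tau eta lam I0 I : ODE s0 tau eta lam I0 I ->
  ODE s0 tau eta lam (fun j => I0 (- j)%Z) (fun j t => I (- j)%Z t).
Proof.
  intros H j t Ht. cbv beta. rewrite (dlap_refl (fun k => I k t)). apply H; auto.
Qed.

Lemma I_upper_exp s0 tau eta lam I0 I (N : Z) gam c2 :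
  0 < s0 -> 0 < tau -> 0 < eta -> 0 < lam ->
  ODE s0 tau eta lam I0 I ->
  (forall j, filterlim (I j) (at_right 0) (locally 0)) -> (forall j, I j 0 = 0) ->
  (forall T, exists M, forall j t, 0 <= t <= T -> Rabs (I j t) <= M) ->
  (forall j, (N < Z.abs j)%Z -> I0 j = 0) ->
  (forall j, 0 <= I0 j < 1) ->
  0 < gam -> 0 < c2 -> cfun s0 tau eta lam gam < c2 ->
  forall j t, 0 <= t ->
  I j t <= exp (gam * IZR (Z.abs N)) / (gam * (c2 - cfun s0 tau eta lam gam)) *
           exp (gam * (c2 * t - IZR j)).
Proof.
  intros Hs Ht He Hl Hode Hc0 Hi Hb Hsupp HI0 Hg Hc2 Hcf j t Htt.
  set (A := exp (gam * IZR (Z.abs N)) / (gam * (c2 - cfun s0 tau eta lam gam))).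
  assert (HA : 0 < A).
  { unfold A. apply Rdiv_lt_0_compat; [apply exp_pos| apply Rmult_lt_0_compat; lra]. }
  set (W := fun (j : Z) u => A * exp (gam * (c2 * u - IZR j))).
  assert (HW : forall j u, 0 < W j u) by (intros; unfold W; apply Rmult_lt_0_compat; auto; apply exp_pos).
  destruct (Hb t) as [M0 HM0].
  assert (HCP := CP (fun j u => I j u - W j u) t (s0 * tau * exp (tau * 0)) lam Htt
     ltac:(rewrite Rmult_0_r, exp_0; nra) Hl).
  cut (I j t - W j t <= 0); [unfold W, A; lra|]. apply HCP; try lra.
  - intros. apply cont_nn_minus; [apply (I_cont s0 tau eta lam I0); auto; lra|].
    apply cont_nn_of_cont_pt. apply derivable_continuous_pt. unfold W.
    eexists. apply is_derive_Reals. auto_derive; auto.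
  - exists M0. intros j0 t0 Hjt. specialize (HM0 j0 t0 Hjt). apply Rabs_def2b in HM0.
    specialize (HW j0 t0). lra.
  - intros. rewrite Hi. specialize (HW j0 0). lra.
  - intros k u Hu Hz.
    set (dW := A * (gam * c2) * exp (gam * (c2 * u - IZR k))).
    exists ((freac s0 tau eta (I k u) + I0 k + lam * dlap (fun k => I k u) k) - dW). split.
    + apply isd_minus; [apply Hode; lra|]. unfold W, dW. auto_derive; auto. unfold Rminus. ring.
    + rewrite (dlap_minus (fun k => I k u) (fun k => W k u)). rewrite Rmult_0_r, exp_0, Rmult_1_r.
      assert (HWk := HW k u).
      generalize (f_lip s0 tau eta 0 (W k u) (I k u) Hs Ht He ltac:(lra) ltac:(lra)).
      rewrite Rmult_0_r, exp_0, Rmult_1_r. intro Hlip.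
      generalize (f_upper s0 tau eta (W k u) Hs Ht ltac:(lra)). intro Hup.
      assert (HdW : dlap (fun k => W k u) k = (exp gam - 2 + exp (- gam)) * W k u).
      { unfold dlap, W. rewrite minus_IZR, plus_IZR.
        replace (gam * (c2 * u - (IZR k - 1))) with (gam * (c2 * u - IZR k) + gam) by ring.
        replace (gam * (c2 * u - (IZR k + 1))) with (gam * (c2 * u - IZR k) + - gam) by ring.
        rewrite !exp_plus. ring. }
      assert (HdW2 : dW = gam * c2 * W k u) by (unfold dW, W; ring).
      assert (Hcf' : gam * cfun s0 tau eta lam gam = (s0 * tau - eta) + lam * (exp (- gam) - 2 + exp gam)).
      { unfold cfun, repr0. field. lra. }
      assert (HI0k : I0 k <= gam * (c2 - cfun s0 tau eta lam gam) * W k u).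
      { destruct (Z_lt_ge_dec N (Z.abs k)) as [P|P].
        - rewrite Hsupp by auto. assert (0 < gam * (c2 - cfun s0 tau eta lam gam)) by (apply Rmult_lt_0_compat; lra). nra.
        - assert (Hk : IZR k <= IZR (Z.abs N)) by (apply IZR_le; lia).
          assert (exp (gam * IZR (Z.abs N)) * exp (- (gam * IZR (Z.abs N))) = 1).
          { rewrite <- exp_plus. replace (gam * IZR (Z.abs N) + - (gam * IZR (Z.abs N))) with 0 by ring. apply exp_0. }
          assert (exp (- (gam * IZR (Z.abs N))) <= exp (gam * (c2 * u - IZR k))).
          { apply exp_mono. assert (0 <= gam * (c2 * u)) by (apply Rmult_le_pos; nra). nra. }
          assert (gam * (c2 - cfun s0 tau eta lam gam) * A = exp (gam * IZR (Z.abs N))).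
          { unfold A. field. split; lra. }
          unfold W. specialize (HI0 k).
          assert (0 < exp (gam * IZR (Z.abs N))) by apply exp_pos.
          nra. }
      rewrite HdW, HdW2. nra.
Qed.

Lemma cfun_pos s0 tau eta lam gam : 0 < eta -> 0 < lam -> 1 < repr0 s0 tau eta -> 0 < gam ->
  0 < cfun s0 tau eta lam gam.
Proof.
  intros He Hl HR Hg. unfold cfun. apply Rdiv_lt_0_compat; auto.
  generalize (exp_ineq1_le gam) (exp_ineq1_le (- gam)). intros. nra.
Qed.

Lemma exp_small A eps X : 0 < A -> 0 < eps -> X <= - ln (A / eps) -> A * exp X <= eps.
Proof.
  intros HA He HX. apply exp_mono in HX. rewrite exp_Ropp, exp_ln in HX by (apply Rdiv_lt_0_compat; auto).
  assert (/ (A / eps) = eps / A) by (field; lra). rewrite H in HX.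
  apply Rmult_le_compat_l with (r := A) in HX; [|lra].
  replace (A * (eps / A)) with eps in HX by (field; lra). lra.
Qed.

Lemma part2 s0 tau eta lam I0 I cstar (N : Z) :
  0 < s0 -> 0 < tau -> 0 < eta -> 0 < lam -> 1 < repr0 s0 tau eta ->
  ODE s0 tau eta lam I0 I ->
  (forall j, filterlim (I j) (at_right 0) (locally 0)) -> (forall j, I j 0 = 0) ->
  (forall T, exists M, forall j t, 0 <= t <= T -> Rabs (I j t) <= M) ->
  (forall j, (N < Z.abs j)%Z -> I0 j = 0) ->
  (forall j, 0 <= I0 j < 1) ->
  (exists g0, 0 < g0 /\ cfun s0 tau eta lam g0 = cstar) ->
  forall c : R, cstar < c ->
     forall eps : R, 0 < eps -> exists T : R, forall t : R, T <= t ->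
       forall j : Z, c * t <= IZR (Z.abs j) -> Rabs (I j t) <= eps.
Proof.
  intros Hs Ht He Hl HR Hode Hc0 Hi Hb Hsupp HI0 [g0 [Hg0 Hcs]] c Hc eps Heps.
  assert (Hcp : 0 < cstar) by (rewrite <- Hcs; apply cfun_pos; auto).
  set (c2 := (cstar + c) / 2).
  set (A := exp (g0 * IZR (Z.abs N)) / (g0 * (c2 - cfun s0 tau eta lam g0))).
  assert (HA : 0 < A).
  { unfold A. apply Rdiv_lt_0_compat; [apply exp_pos| apply Rmult_lt_0_compat; unfold c2; lra]. }
  exists (Rmax 0 (ln (A / eps) / (g0 * (c - c2)))).
  intros t Htt j Hj.
  assert (Ht0 : 0 <= t) by (generalize (Rmax_l 0 (ln (A / eps) / (g0 * (c - c2)))); lra).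
  assert (Ht1 : ln (A / eps) <= g0 * (c - c2) * t).
  { generalize (Rmax_r 0 (ln (A / eps) / (g0 * (c - c2)))); intro.
    assert (0 < g0 * (c - c2)) by (apply Rmult_lt_0_compat; unfold c2; lra).
    assert (ln (A / eps) / (g0 * (c - c2)) * (g0 * (c - c2)) = ln (A / eps)) by (field; repeat split; unfold c2; lra).
    assert (ln (A / eps) / (g0 * (c - c2)) * (g0 * (c - c2)) <= t * (g0 * (c - c2))) by (apply Rmult_le_compat_r; lra).
    lra. }
  assert (Hcf : cfun s0 tau eta lam g0 < c2) by (unfold c2; lra).
  assert (Hc2 : 0 < c2) by (unfold c2; lra).
  assert (Hsupp' : forall j, (N < Z.abs j)%Z -> (fun j => I0 (- j)%Z) j = 0).
  { intros k Hk. apply Hsupp. lia. }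
  destruct (Z_le_gt_dec 0 j) as [Pj|Pj].
  - assert (Hnn := I_nonneg s0 tau eta lam I0 I Hs Ht He Hl Hode Hc0 Hi Hb (fun j => proj1 (HI0 j)) j t Ht0).
    assert (Hup := I_upper_exp s0 tau eta lam I0 I N g0 c2 Hs Ht He Hl Hode Hc0 Hi Hb Hsupp HI0 Hg0 Hc2 Hcf j t Ht0).
    fold A in Hup. rewrite Rabs_right by lra.
    eapply Rle_trans; [exact Hup|]. apply exp_small; auto.
    assert (IZR (Z.abs j) = IZR j) by (f_equal; lia). nra.
  - set (I' := fun j t => I (- j)%Z t).
    assert (Hode' := ODE_refl s0 tau eta lam I0 I Hode).
    assert (Hc0' : forall j, filterlim (I' j) (at_right 0) (locally 0)) by (intros; apply Hc0).
    assert (Hi' : forall j, I' j 0 = 0) by (intros; apply Hi).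
    assert (Hb' : forall T, exists M, forall j t, 0 <= t <= T -> Rabs (I' j t) <= M).
    { intros T. destruct (Hb T) as [M HM]. exists M. intros; apply HM; auto. }
    assert (HI0' : forall j, 0 <= (fun j => I0 (- j)%Z) j < 1) by (intros; apply HI0).
    assert (Hnn := I_nonneg s0 tau eta lam _ I' Hs Ht He Hl Hode' Hc0' Hi' Hb' (fun j => proj1 (HI0' j)) (- j)%Z t Ht0).
    assert (Hup := I_upper_exp s0 tau eta lam _ I' N g0 c2 Hs Ht He Hl Hode' Hc0' Hi' Hb' Hsupp' HI0' Hg0 Hc2 Hcf (- j)%Z t Ht0).
    fold A in Hup. unfold I' in Hnn, Hup. rewrite Z.opp_involutive in Hnn, Hup.
    rewrite Rabs_right by lra.
    eapply Rle_trans; [exact Hup|]. apply exp_small; auto.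
    assert (IZR (Z.abs j) = IZR (- j)) by (f_equal; lia). nra.
Qed.

Lemma isd_eq (f : R -> R) x l l' : is_derive f x l -> l = l' -> is_derive f x l'.
Proof. intros H E; subst; auto. Qed.

Lemma I_shift_der s0 tau eta lam I0 I s : ODE s0 tau eta lam I0 I -> 0 < s ->
  forall k u, 0 <= u -> is_derive (fun v => I k (s + v)) u
     (freac s0 tau eta (I k (s + u)) + I0 k + lam * dlap (fun k => I k (s + u)) k).
Proof.
  intros Hode Hs k u Hu.
  assert (H1 : is_derive (fun v => s + v) u 1) by (auto_derive; auto).
  generalize (is_derive_comp (I k) (fun v => s + v) u _ 1 (Hode k (s + u) ltac:(lra)) H1).
  intro H. eapply isd_eq; [exact H|]. exact (scal_one _).
Qed.

Lemma exp_pos_sum_ge2 : 2 <= exp 1 + exp (-1).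
Proof. generalize (exp_ineq1_le 1) (exp_ineq1_le (-1)). lra. Qed.

Lemma local_conv s0 tau eta lam I0 I V del M eps :
  0 < s0 -> 0 < tau -> 0 < eta -> 0 < lam ->
  ODE s0 tau eta lam I0 I -> (forall j u, 0 <= u -> 0 <= I j u) -> (forall j, 0 <= I0 j) ->
  (forall j, 0 = freac s0 tau eta (V j) + I0 j + lam * dlap V j) ->
  0 < del -> (forall j, del <= V j <= M) -> 0 < eps ->
  exists tau0 R, 0 <= tau0 /\ forall s j, 0 < s ->
    (forall k, IZR (Z.abs (k - j)) <= R -> del <= I k s) -> V j - eps <= I j (s + tau0).
Proof.
  intros Hs Ht He Hl Hode Hnn HI0 HVe Hdel HV Heps.
  assert (HdM : del <= M) by (generalize (HV 0%Z); lra).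
  set (th0 := del / M).
  assert (Hth0 : 0 < th0 <= 1).
  { unfold th0. split; [apply Rdiv_lt_0_compat; lra|]. apply Rmult_le_reg_r with M; [lra|].
    field_simplify; lra. }
  set (kap := s0 * tau * tau * del * exp (- (tau * M)) / 2).
  assert (Hkap : 0 < kap).
  { unfold kap. generalize (exp_pos (- (tau * M))). intro. apply Rdiv_lt_0_compat; [|lra].
    repeat apply Rmult_lt_0_compat; auto. }
  set (a := kap * th0).
  assert (Ha : 0 < a) by (unfold a; apply Rmult_lt_0_compat; lra).
  set (K1 := s0 * tau + lam * (exp 1 + exp (-1) - 2)).
  assert (HK1 : 0 <= K1) by (unfold K1; generalize exp_pos_sum_ge2; nra).
  set (tau0 := Rmax 0 (ln (2 * M / eps) / a)).
  assert (Htau0 : 0 <= tau0) by apply Rmax_l.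
  set (b0 := eps / 4 * exp (- (K1 * tau0))).
  assert (Hb0 : 0 < b0) by (unfold b0; generalize (exp_pos (- (K1 * tau0))); intro; nra).
  set (R := Rmax 0 (ln (del / b0))).
  exists tau0, R. split; auto. intros s j Hsp Hwin.
  set (th := fun u => 1 - (1 - th0) * exp (- (a * u))).
  assert (Hth : forall u, 0 <= u -> th0 <= th u <= 1).
  { intros u Hu. unfold th. assert (exp (- (a * u)) <= 1) by (rewrite <- exp_0; apply exp_mono; nra).
    generalize (exp_pos (- (a * u))). intros. nra. }
  set (E := fun k => exp (IZR k - IZR j) + exp (IZR j - IZR k)).
  assert (HE : forall k, 0 < E k) by (intros; unfold E; generalize (exp_pos (IZR k - IZR j)) (exp_pos (IZR j - IZR k)); lra).
  assert (HdE : forall k, dlap E k = (exp 1 + exp (-1) - 2) * E k).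
  { intros k. unfold dlap, E. rewrite minus_IZR, plus_IZR.
    replace (IZR k - 1 - IZR j) with ((IZR k - IZR j) + - 1) by ring.
    replace (IZR j - (IZR k - 1)) with ((IZR j - IZR k) + 1) by ring.
    replace (IZR k + 1 - IZR j) with ((IZR k - IZR j) + 1) by ring.
    replace (IZR j - (IZR k + 1)) with ((IZR j - IZR k) + - 1) by ring.
    rewrite !exp_plus. ring. }
  set (w := fun k u => th u * V k - b0 * exp (K1 * u) * E k).
  set (L := s0 * tau * exp (tau * 0)).
  assert (HL : L = s0 * tau) by (unfold L; rewrite Rmult_0_r, exp_0; ring).
  assert (HCP := CP (fun k u => w k u - I k (s + u)) tau0 L lam Htau0 ltac:(rewrite HL; nra) Hl).
  assert (Hfin : w j tau0 <= I j (s + tau0)).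
  { cut (w j tau0 - I j (s + tau0) <= 0); [lra|]. apply HCP; [ | | | |lra].
    - intros k u Hu. apply cont_nn_minus; apply cont_nn_of_cont_pt; apply derivable_continuous_pt.
      + eexists. apply is_derive_Reals. unfold w, th. auto_derive; auto.
      + eexists. apply is_derive_Reals. apply (I_shift_der s0 tau eta lam I0 I s Hode Hsp); lra.
    - exists M. intros k u Hu. unfold w. specialize (Hth u ltac:(lra)). specialize (HV k).
      generalize (Hnn k (s + u) ltac:(lra)) (HE k) (exp_pos (K1 * u)). intros.
      assert (th u * V k <= 1 * V k) by (apply Rmult_le_compat_r; lra).
      assert (0 <= b0 * exp (K1 * u) * E k) by (apply Rmult_le_pos; [apply Rmult_le_pos|]; lra).
      lra.
    - intros k. unfold w, th. rewrite Rmult_0_r, Ropp_0, exp_0, Rmult_0_r, exp_0.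
      replace (1 - (1 - th0) * 1) with th0 by ring.
      destruct (Rle_dec (IZR (Z.abs (k - j))) R) as [P|P].
      + specialize (Hwin k P). rewrite Rplus_0_r. specialize (HV k).
        assert (th0 * V k <= del).
        { unfold th0. apply Rmult_le_reg_r with M; [lra|]. field_simplify; [|lra]. nra. }
        generalize (HE k). nra.
      + apply Rnot_le_lt in P. rewrite Rplus_0_r.
        assert (HEk : exp R <= E k).
        { unfold E. apply Rle_trans with (exp (IZR (Z.abs (k - j)))); [apply exp_mono; lra|].
          rewrite abs_IZR, minus_IZR. unfold Rabs. destruct Rcase_abs.
          - generalize (exp_pos (IZR k - IZR j)). replace (- (IZR k - IZR j)) with (IZR j - IZR k) by ring. lra.
          - generalize (exp_pos (IZR j - IZR k)). lra. }
        assert (del / b0 <= exp R).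
        { unfold R. apply Rle_trans with (exp (ln (del / b0))).
          - rewrite exp_ln; [lra| apply Rdiv_lt_0_compat; lra].
          - apply exp_mono. apply Rmax_r. }
        assert (del <= b0 * E k).
        { assert (del / b0 * b0 = del) by (field; lra). nra. }
        assert (th0 * V k <= del).
        { unfold th0. specialize (HV k). apply Rmult_le_reg_r with M; [lra|]. field_simplify; [|lra]. nra. }
        generalize (Hnn k s ltac:(lra)). lra.
    - intros k u Hu Hz. cbv beta in Hz.
      set (dw := a * (1 - th0) * exp (- (a * u)) * V k - b0 * K1 * exp (K1 * u) * E k).
      exists (dw - (freac s0 tau eta (I k (s + u)) + I0 k + lam * dlap (fun k => I k (s + u)) k)).
      split.
      + apply isd_minus.
        * unfold w, th, dw. auto_derive; auto. ring.
        * apply (I_shift_der s0 tau eta lam I0 I s Hode Hsp); lra.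
      + rewrite (dlap_minus (fun k => w k u) (fun k => I k (s + u))).
        assert (Hdw : dlap (fun k => w k u) k = th u * dlap V k - b0 * exp (K1 * u) * dlap E k).
        { unfold w, dlap. ring. }
        rewrite Hdw, HdE. rewrite HL.
        set (Ik := I k (s + u)). set (Vk := V k). set (Ek := E k). set (t1 := th u).
        set (bt := b0 * exp (K1 * u)).
        assert (Hbt : 0 < bt) by (unfold bt; generalize (exp_pos (K1 * u)); intro; nra).
        assert (HIk : 0 <= Ik) by (apply Hnn; lra).
        assert (Hw : w k u = t1 * Vk - bt * Ek) by (unfold w, bt, t1, Vk, Ek; reflexivity).
        rewrite Hw in Hz. fold Ik in Hz.
        assert (HEk : 0 < Ek) by apply HE.
        destruct (Hth u ltac:(lra)) as [Ht1a Ht1b]. fold t1 in Ht1a, Ht1b.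
        assert (HVk : del <= Vk <= M) by apply HV.
        assert (Hlip1 : freac s0 tau eta (t1 * Vk - bt * Ek) - freac s0 tau eta Ik <= s0 * tau * (t1 * Vk - bt * Ek - Ik)).
        { generalize (f_lip s0 tau eta 0 Ik (t1 * Vk - bt * Ek) Hs Ht He ltac:(lra) ltac:(lra)).
          rewrite Rmult_0_r, exp_0, Rmult_1_r. auto. }
        assert (Hlip2 : freac s0 tau eta (t1 * Vk) - freac s0 tau eta (t1 * Vk - bt * Ek) <= s0 * tau * (bt * Ek)).
        { generalize (f_lip s0 tau eta 0 (t1 * Vk - bt * Ek) (t1 * Vk) Hs Ht He ltac:(lra)).
          rewrite Rmult_0_r, exp_0, Rmult_1_r. intro Hf. replace (s0 * tau * (bt * Ek)) with (s0 * tau * (t1 * Vk - (t1 * Vk - bt * Ek))) by ring.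
          apply Hf. assert (0 < bt * Ek) by (apply Rmult_lt_0_compat; auto). lra. }
        assert (Hgap := f_gap s0 tau eta Vk t1 Hs Ht ltac:(lra) ltac:(lra)).
        assert (Hkv : kap <= s0 * tau * tau * Vk * exp (- (tau * Vk)) / 2).
        { unfold kap. assert (exp (- (tau * M)) <= exp (- (tau * Vk))) by (apply exp_mono; nra).
          assert (0 < s0 * tau * tau) by (repeat apply Rmult_lt_0_compat; auto).
          assert (del * exp (- (tau * M)) <= Vk * exp (- (tau * Vk))).
          { apply Rmult_le_compat; try lra. left; apply exp_pos. }
          assert (s0 * tau * tau * (del * exp (- (tau * M))) <= s0 * tau * tau * (Vk * exp (- (tau * Vk)))) by (apply Rmult_le_compat_l; lra).
          lra. }
        assert (Hgap2 : a * (1 - t1) * Vk <= freac s0 tau eta (t1 * Vk) - t1 * freac s0 tau eta Vk).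
        { eapply Rle_trans; [|exact Hgap].
          assert (0 <= (1 - t1) * Vk) by nra.
          assert (a <= kap * t1) by (unfold a; apply Rmult_le_compat_l; lra).
          assert (kap * t1 <= s0 * tau * tau * Vk * exp (- (tau * Vk)) / 2 * t1) by (apply Rmult_le_compat_r; lra).
          assert (a * ((1 - t1) * Vk) <= (s0 * tau * tau * Vk * exp (- (tau * Vk)) / 2 * t1) * ((1 - t1) * Vk))
            by (apply Rmult_le_compat_r; lra).
          lra. }
        assert (Hdw2 : dw = a * (1 - t1) * Vk - K1 * bt * Ek).
        { unfold dw, t1, th, bt, Vk, Ek. ring. }
        rewrite Hdw2.
        specialize (HVe k). fold Vk in HVe. specialize (HI0 k).
        assert (HlV : lam * dlap V k = - freac s0 tau eta Vk - I0 k) by lra.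
        assert (Hx : lam * (t1 * dlap V k) = t1 * (- freac s0 tau eta Vk - I0 k)) by (rewrite <- HlV; ring).
        unfold K1 in *.
        assert (0 <= (1 - t1) * I0 k) by nra.
        nra. }
  assert (HEj : E j = 2) by (unfold E; rewrite Rminus_eq_0, exp_0; ring).
  assert (Hb : b0 * exp (K1 * tau0) = eps / 4).
  { unfold b0. rewrite Rmult_assoc, <- exp_plus. replace (- (K1 * tau0) + K1 * tau0) with 0 by ring.
    rewrite exp_0. ring. }
  assert (Hx : 2 * M * exp (- (a * tau0)) <= eps).
  { apply exp_small; [lra|lra|].
    assert (ln (2 * M / eps) / a <= tau0) by apply Rmax_r.
    assert (ln (2 * M / eps) / a * a = ln (2 * M / eps)) by (field; lra).
    assert (ln (2 * M / eps) / a * a <= tau0 * a) by (apply Rmult_le_compat_r; lra).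
    lra. }
  unfold w, th in Hfin. rewrite HEj in Hfin.
  assert (HVj := HV j).
  assert (0 < exp (- (a * tau0))) by apply exp_pos.
  assert ((1 - th0) * exp (- (a * tau0)) * V j <= M * exp (- (a * tau0))).
  { assert ((1 - th0) * V j <= M) by nra. nra. }
  nra.
Qed.

Definition Lpi al := PI / (2 * al).
Definition clampB al x := Rmax (- (2 * Lpi al)) (Rmin (2 * Lpi al) x).
Definition bump gam al x := exp (- (gam * x)) * Rmax 0 (cos (al * clampB al x)).

Lemma lip_cont (f : R -> R) x : (forall x y, Rabs (f x - f y) <= Rabs (x - y)) -> continuity_pt f x.
Proof.
  intros H. apply cont_pt_of_eps. intros eps He. exists eps. split; auto.
  intros u Hu. eapply Rle_lt_trans; [apply H|exact Hu].
Qed.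

Lemma Lpi_pos al : 0 < al -> 0 < Lpi al.
Proof. intros. unfold Lpi. generalize PI_RGT_0. intro. apply Rdiv_lt_0_compat; lra. Qed.

Lemma al_Lpi al : 0 < al -> al * Lpi al = PI / 2.
Proof. intros. unfold Lpi. field. lra. Qed.

Lemma Lpi_ge1 al : 0 < al <= 1 -> 1 < Lpi al.
Proof.
  intros H. unfold Lpi. generalize PI2_1. intro.
  apply Rmult_lt_reg_r with (2 * al); [lra|]. field_simplify; [|lra]. nra.
Qed.

Lemma bump_cont gam al x : continuity_pt (bump gam al) x.
Proof.
  unfold bump. apply continuity_pt_mult.
  - apply derivable_continuous_pt. eexists. apply is_derive_Reals. auto_derive; auto.
  - change (fun x => Rmax 0 (cos (al * clampB al x))) with
      (comp (Rmax 0) (comp (fun y => cos (al * y)) (clampB al))).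
    apply continuity_pt_comp; [apply continuity_pt_comp|].
    + apply lip_cont. intros a b. unfold clampB, Rmin, Rmax.
      repeat destruct Rle_dec; unfold Rabs; repeat destruct Rcase_abs; lra.
    + apply derivable_continuous_pt. eexists. apply is_derive_Reals. auto_derive; auto.
    + apply lip_cont. intros a b. unfold Rmax.
      repeat destruct Rle_dec; unfold Rabs; repeat destruct Rcase_abs; lra.
Qed.

Lemma bump_in gam al x : 0 < al -> Rabs x < Lpi al ->
  bump gam al x = exp (- (gam * x)) * cos (al * x) /\ 0 < cos (al * x).
Proof.
  intros Ha Hx. assert (HL := Lpi_pos al Ha). assert (E := al_Lpi al Ha).
  apply Rabs_def2 in Hx.
  assert (Hc : clampB al x = x) by (unfold clampB, Rmin, Rmax; repeat destruct Rle_dec; lra).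
  assert (0 < cos (al * x)) by (apply cos_gt_0; nra).
  unfold bump. rewrite Hc. rewrite Rmax_right by lra. auto.
Qed.

Lemma cos_nonpos_band y : PI / 2 <= Rabs y <= PI -> cos y <= 0.
Proof.
  intros H. unfold Rabs in H. destruct Rcase_abs.
  - rewrite (cos_sym y). apply cos_le_0; lra.
  - apply cos_le_0; lra.
Qed.

Lemma bump_out gam al x : 0 < al -> Lpi al <= Rabs x -> bump gam al x = 0.
Proof.
  intros Ha Hx. assert (HL := Lpi_pos al Ha). assert (E := al_Lpi al Ha).
  unfold bump. rewrite Rmax_left; [ring|].
  assert (Hy : Lpi al <= Rabs (clampB al x) <= 2 * Lpi al).
  { unfold clampB, Rmin, Rmax. repeat destruct Rle_dec; unfold Rabs in *; repeat destruct Rcase_abs; lra. }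
  apply cos_nonpos_band. rewrite Rabs_mult, (Rabs_right al) by lra.
  split; nra.
Qed.

Lemma bump_ge gam al x : 0 < al -> Rabs x <= 2 * Lpi al ->
  exp (- (gam * x)) * cos (al * x) <= bump gam al x.
Proof.
  intros Ha Hx. apply Rabs_def2b in Hx.
  assert (Hc : clampB al x = x) by (unfold clampB, Rmin, Rmax; repeat destruct Rle_dec; lra).
  unfold bump. rewrite Hc. apply Rmult_le_compat_l; [left; apply exp_pos| apply Rmax_r].
Qed.

Lemma bump_nn gam al x : 0 <= bump gam al x.
Proof. unfold bump. apply Rmult_le_pos; [left; apply exp_pos| apply Rmax_l]. Qed.

Lemma bump_le gam al x : 0 < al -> 0 <= gam -> bump gam al x <= exp (gam * Lpi al).
Proof.
  intros Ha Hg. destruct (Rlt_le_dec (Rabs x) (Lpi al)) as [P|P].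
  - destruct (bump_in gam al x Ha P) as [E Hc]. rewrite E.
    assert (exp (- (gam * x)) <= exp (gam * Lpi al)).
    { apply exp_mono. apply Rabs_def2 in P. nra. }
    generalize (COS_bound (al * x)) (exp_pos (- (gam * x))). nra.
  - rewrite bump_out by auto. left; apply exp_pos.
Qed.

Lemma bump0 gam al : 0 < al -> bump gam al 0 = 1.
Proof.
  intros Ha. destruct (bump_in gam al 0 Ha) as [E _].
  - rewrite Rabs_R0. apply Lpi_pos; auto.
  - rewrite E. rewrite !Rmult_0_r, Ropp_0, exp_0, cos_0. ring.
Qed.

Lemma bump_sub s0 tau eta lam I0 I r' nu gam al c eps x0 s :
  0 < s0 -> 0 < tau -> 0 < eta -> 0 < lam ->
  ODE s0 tau eta lam I0 I -> (forall j u, 0 <= u -> 0 <= I j u) -> (forall j, 0 <= I0 j) ->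
  (forall v, 0 <= v <= nu -> r' * v <= freac s0 tau eta v) ->
  0 < al <= 1 -> 0 <= gam -> 0 <= c ->
  c * al = lam * (exp gam - exp (- gam)) * sin al ->
  c * gam <= r' + lam * ((exp gam + exp (- gam)) * cos al - 2) ->
  0 < eps -> eps * exp (gam * Lpi al) <= nu -> 0 < s ->
  (forall k, eps * bump gam al (IZR k - x0) <= I k s) ->
  forall k u, 0 <= u -> eps * bump gam al (IZR k - x0 - c * u) <= I k (s + u).
Proof.
  intros Hs Ht He Hl Hode Hnn HI0 Hr Hal Hg Hc Hbal HA Heps Hnu Hsp Hinit k u Hu.
  set (L := s0 * tau * exp (tau * 0)).
  assert (HL : L = s0 * tau) by (unfold L; rewrite Rmult_0_r, exp_0; ring).
  assert (HCP := CP (fun k v => eps * bump gam al (IZR k - x0 - c * v) - I k (s + v)) u L lam Hu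
     ltac:(rewrite HL; nra) Hl).
  cut (eps * bump gam al (IZR k - x0 - c * u) - I k (s + u) <= 0); [lra|].
  apply HCP; [| | | |lra].
  - intros j v Hv. apply cont_nn_minus; apply cont_nn_of_cont_pt.
    + apply continuity_pt_mult; [apply continuity_pt_const; intros ? ?; auto|].
      change (fun v => bump gam al (IZR j - x0 - c * v)) with (comp (bump gam al) (fun v => IZR j - x0 - c * v)).
      apply continuity_pt_comp; [|apply bump_cont].
      apply derivable_continuous_pt. eexists. apply is_derive_Reals. auto_derive; auto.
    + apply derivable_continuous_pt. eexists. apply is_derive_Reals.
      apply (I_shift_der s0 tau eta lam I0 I s Hode Hsp); lra.
  - exists (eps * exp (gam * Lpi al)). intros j v Hv.
    generalize (bump_le gam al (IZR j - x0 - c * v) ltac:(lra) Hg) (Hnn j (s + v) ltac:(lra)). nra.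
  - intros j. cbv beta. rewrite Rmult_0_r, Rminus_0_r, Rplus_0_r. specialize (Hinit j). lra.
  - intros j v Hv Hz. cbv beta in Hz.
    set (y := IZR j - x0) in *. set (x := y - c * v) in *.
    assert (Hx : Rabs x < Lpi al).
    { destruct (Rlt_le_dec (Rabs x) (Lpi al)) as [P|P]; auto.
      rewrite (bump_out gam al x) in Hz by lra. generalize (Hnn j (s + v) ltac:(lra)). lra. }
    set (C := cos (al * x)). set (S := sin (al * x)). set (ex := exp (- (gam * x))).
    set (dw := eps * c * ex * (gam * C + al * S)).
    exists (dw - (freac s0 tau eta (I j (s + v)) + I0 j + lam * dlap (fun k => I k (s + v)) j)).
    split.
    + apply isd_minus; [| apply (I_shift_der s0 tau eta lam I0 I s Hode Hsp); lra].
      apply is_derive_ext_loc with (f := fun v' => eps * (exp (- (gam * (y - c * v'))) * cos (al * (y - c * v')))).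
      * assert (Hd : 0 < (Lpi al - Rabs x) / (c + 1)) by (apply Rdiv_lt_0_compat; lra).
        exists (mkposreal _ Hd). intros v' Hv'. simpl in Hv'. unfold ball in Hv'; simpl in Hv'.
        unfold AbsRing_ball, abs, minus, plus, opp in Hv'; simpl in Hv'.
        destruct (bump_in gam al (y - c * v') ltac:(lra)) as [E _].
        { assert (Rabs (y - c * v' - x) <= c * Rabs (v' - v)).
          { unfold x. replace (y - c * v' - (y - c * v)) with (- c * (v' - v)) by ring.
            rewrite Rabs_mult, Rabs_Ropp, Rabs_right by lra. lra. }
          assert (c * Rabs (v' - v) <= c * ((Lpi al - Rabs x) / (c + 1))).
          { apply Rmult_le_compat_l; [lra|]. left. exact Hv'. }
          assert (c * ((Lpi al - Rabs x) / (c + 1)) < Lpi al - Rabs x).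
          { apply Rmult_lt_reg_r with (c + 1); [lra|]. field_simplify; lra. }
          generalize (Rabs_triang_inv (y - c * v') x). intro.
          replace (y - c * v') with ((y - c * v' - x) + x) by ring.
          eapply Rle_lt_trans; [apply Rabs_triang|]. lra. }
        cbv beta. fold y. rewrite E. reflexivity.
      * unfold dw, ex, C, S, x. auto_derive; auto. unfold Rminus. ring.
    + rewrite (dlap_minus (fun k => eps * bump gam al (IZR k - x0 - c * v)) (fun k => I k (s + v))).
      rewrite HL.
      destruct (bump_in gam al x ltac:(lra) Hx) as [Ebx HC]. fold C ex in Ebx, HC.
      assert (HL1 := Lpi_ge1 al Hal).
      assert (Hxm : IZR (j - 1) - x0 - c * v = x - 1) by (unfold x, y; rewrite minus_IZR; ring).
      assert (Hxp : IZR (j + 1) - x0 - c * v = x + 1) by (unfold x, y; rewrite plus_IZR; ring).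
      assert (Hwm : eps * (ex * exp gam * (C * cos al + S * sin al)) <= eps * bump gam al (x - 1)).
      { apply Rmult_le_compat_l; [lra|].
        replace (ex * exp gam * (C * cos al + S * sin al)) with (exp (- (gam * (x - 1))) * cos (al * (x - 1))).
        - apply bump_ge; [lra|]. apply Rabs_def2 in Hx. apply Rabs_le. lra.
        - unfold ex, C, S. replace (- (gam * (x - 1))) with (- (gam * x) + gam) by ring.
          replace (al * (x - 1)) with (al * x - al) by ring. rewrite exp_plus, cos_minus. ring. }
      assert (Hwp : eps * (ex * exp (- gam) * (C * cos al - S * sin al)) <= eps * bump gam al (x + 1)).
      { apply Rmult_le_compat_l; [lra|].
        replace (ex * exp (- gam) * (C * cos al - S * sin al)) with (exp (- (gam * (x + 1))) * cos (al * (x + 1))).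
        - apply bump_ge; [lra|]. apply Rabs_def2 in Hx. apply Rabs_le. lra.
        - unfold ex, C, S. replace (- (gam * (x + 1))) with (- (gam * x) + - gam) by ring.
          replace (al * (x + 1)) with (al * x + al) by ring. rewrite exp_plus, cos_plus. ring. }
      assert (Hdl : dlap (fun k => eps * bump gam al (IZR k - x0 - c * v)) j =
                    eps * bump gam al (x - 1) - 2 * (eps * bump gam al x) + eps * bump gam al (x + 1)).
      { unfold dlap. rewrite Hxm, Hxp. reflexivity. }
      rewrite Hdl. rewrite Ebx.
      set (w := eps * (ex * C)).
      assert (Hex : 0 < ex) by apply exp_pos.
      assert (Hw0 : 0 < w) by (unfold w; apply Rmult_lt_0_compat; [lra| apply Rmult_lt_0_compat; lra]).
      assert (HIv : 0 <= I j (s + v)) by (apply Hnn; lra).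
      assert (Hz' : I j (s + v) < w) by (unfold w; rewrite <- Ebx; lra).
      assert (Hlip1 : freac s0 tau eta w - freac s0 tau eta (I j (s + v)) <= s0 * tau * (w - I j (s + v))).
      { generalize (f_lip s0 tau eta 0 (I j (s + v)) w Hs Ht He ltac:(lra) ltac:(lra)).
        rewrite Rmult_0_r, exp_0, Rmult_1_r. auto. }
      assert (Hrw : r' * w <= freac s0 tau eta w).
      { apply Hr. split; [lra|]. eapply Rle_trans; [|exact Hnu]. unfold w. rewrite <- Ebx.
        apply Rmult_le_compat_l; [lra|]. apply bump_le; lra. }
      specialize (HI0 j).
      assert (Hkey : c * (gam * C + al * S) <= r' * C + lam * ((exp gam + exp (- gam)) * cos al - 2) * C
                     + lam * (exp gam - exp (- gam)) * sin al * S).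
      { assert (c * gam * C <= (r' + lam * ((exp gam + exp (- gam)) * cos al - 2)) * C) by (apply Rmult_le_compat_r; lra).
        assert (c * al * S = lam * (exp gam - exp (- gam)) * sin al * S) by (rewrite Hbal; ring).
        nra. }
      assert (Hepsex : 0 < eps * ex) by (apply Rmult_lt_0_compat; lra).
      assert (Hkey2 : eps * ex * (c * (gam * C + al * S)) <= eps * ex * (r' * C + lam * ((exp gam + exp (- gam)) * cos al - 2) * C
                     + lam * (exp gam - exp (- gam)) * sin al * S)) by (apply Rmult_le_compat_l; lra).
      assert (Hdw : dw = eps * ex * (c * (gam * C + al * S))) by (unfold dw; ring).
      rewrite Hdw.
      assert (lam * (eps * (ex * exp gam * (C * cos al + S * sin al))) <= lam * (eps * bump gam al (x - 1))) by (apply Rmult_le_compat_l; lra).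
      assert (lam * (eps * (ex * exp (- gam) * (C * cos al - S * sin al))) <= lam * (eps * bump gam al (x + 1))) by (apply Rmult_le_compat_l; lra).
      unfold w in *. unfold dlap. nra.
Qed.
Lemma cos_lb2 a : 0 <= a <= 1 -> 1 - a * a / 2 <= cos a.
Proof.
  intros H. generalize PI2_1; intro.
  destruct (cos_bound a 0 ltac:(lra) ltac:(lra)) as [H1 _].
  unfold cos_approx, cos_term in H1. simpl in H1. lra.
Qed.
Lemma sin_lb3 a : 0 <= a <= 1 -> a - a * a * a / 6 <= sin a.
Proof.
  intros H. generalize PI2_1; intro.
  destruct (sin_bound a 0 ltac:(lra) ltac:(lra)) as [H1 _].
  unfold sin_approx, sin_term in H1. simpl in H1. lra.
Qed.
Lemma sin_ub a : 0 <= a <= 1 -> sin a <= a.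
Proof.
  intros H. generalize PI2_1; intro.
  destruct (sin_bound a 0 ltac:(lra) ltac:(lra)) as [_ H1].
  unfold sin_approx, sin_term in H1. simpl in H1.
  assert (a * a * a * a * a / 120 <= a * a * a / 6).
  { assert (0 <= a * a * a) by (repeat apply Rmult_le_pos; lra).
    assert (a * a <= 1) by nra. nra. }
  lra.
Qed.

Lemma spread_params s0 tau eta lam cstar c1 :
  0 < s0 -> 0 < tau -> 0 < eta -> 0 < lam -> 1 < repr0 s0 tau eta ->
  (forall g, 0 < g -> cstar <= cfun s0 tau eta lam g) -> 0 < c1 < cstar ->
  exists r' nu gam al ct al0, 0 < r' /\ 0 < nu /\
    (forall v, 0 <= v <= nu -> r' * v <= freac s0 tau eta v) /\
    0 < gam /\ 0 < al <= 1 /\ c1 < ct /\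
    ct * al = lam * (exp gam - exp (- gam)) * sin al /\
    ct * gam <= r' + lam * ((exp gam + exp (- gam)) * cos al - 2) /\
    0 < al0 <= al / 2 /\
    0 <= r' + lam * ((exp 0 + exp (- 0)) * cos al0 - 2).
Proof.
  intros Hs Ht He Hl HR Hmin Hc1.
  set (r := s0 * tau - eta).
  assert (Hr : 0 < r).
  { unfold r. unfold repr0 in HR. apply Rmult_lt_compat_r with (r := eta) in HR; auto.
    unfold Rdiv in HR. rewrite Rmult_assoc, Rinv_l in HR by lra. lra. }
  set (c2 := (c1 + cstar) / 2).
  set (gam := arcsinh (c2 / (2 * lam))).
  assert (Hgam : 0 < gam).
  { unfold gam. rewrite <- arcsinh_0. apply arcsinh_lt. apply Rdiv_lt_0_compat; unfold c2; lra. }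
  assert (Hsh : exp gam - exp (- gam) = c2 / lam).
  { generalize (sinh_arcsinh (c2 / (2 * lam))). fold gam. unfold sinh. intro E.
    replace (c2 / lam) with (2 * (c2 / (2 * lam))) by (field; lra). lra. }
  set (S := exp gam + exp (- gam)).
  assert (HS : 2 <= S) by (unfold S; generalize (exp_ineq1_le gam) (exp_ineq1_le (- gam)); lra).
  assert (Hcf := Hmin gam Hgam).
  assert (Hcf2 : cstar * gam <= r + lam * (S - 2)).
  { unfold cfun, repr0 in Hcf. unfold S, r.
    apply Rmult_le_compat_r with (r := gam) in Hcf; [|lra].
    replace ((eta * (s0 * tau / eta - 1) + lam * (exp (- gam) - 2 + exp gam)) / gam * gam)
      with (s0 * tau - eta + lam * (exp gam + exp (- gam) - 2)) in Hcf by (field; lra). lra. }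
  set (m := (cstar - c2) * gam).
  assert (Hm : 0 < m) by (unfold m, c2; apply Rmult_lt_0_compat; lra).
  set (m' := Rmin m r / 2).
  assert (Hm' : 0 < m') by (unfold m'; generalize (Rmin_pos m r Hm Hr); lra).
  assert (Hm'1 : m' <= m / 2) by (unfold m'; generalize (Rmin_l m r); lra).
  assert (Hm'2 : m' <= r / 2) by (unfold m'; generalize (Rmin_r m r); lra).
  set (r' := r - m').
  set (nu := m' / (s0 * tau * tau)).
  assert (Hnu : 0 < nu) by (unfold nu; apply Rdiv_lt_0_compat; [lra| repeat apply Rmult_lt_0_compat; lra]).
  set (al := Rmin 1 (Rmin (2 * m' / (lam * S)) (3 * (c2 - c1) / c2))).
  assert (Hal : 0 < al <= 1).
  { unfold al. split; [|apply Rmin_l]. apply Rmin_pos; [lra|]. apply Rmin_pos.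
    - apply Rdiv_lt_0_compat; [lra| apply Rmult_lt_0_compat; lra].
    - apply Rdiv_lt_0_compat; unfold c2; lra. }
  assert (Hal1 : al <= 2 * m' / (lam * S)) by (unfold al; eapply Rle_trans; [apply Rmin_r| apply Rmin_l]).
  assert (Hal2 : al <= 3 * (c2 - c1) / c2) by (unfold al; eapply Rle_trans; [apply Rmin_r| apply Rmin_r]).
  set (ct := c2 * sin al / al).
  set (al0 := Rmin (al / 2) (r' / lam)).
  exists r', nu, gam, al, ct, al0.
  assert (Hsin1 := sin_lb3 al ltac:(lra)). assert (Hsin2 := sin_ub al ltac:(lra)).
  assert (Hcos := cos_lb2 al ltac:(lra)).
  assert (Hc2 : 0 < c2) by (unfold c2; lra).
  split; [unfold r'; lra|]. split; [auto|]. split.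
  { intros v Hv. generalize (f_lower_small s0 tau eta v Hs Ht ltac:(lra)). intro Hf.
    assert (s0 * tau * tau * v <= m').
    { assert (s0 * tau * tau * v <= s0 * tau * tau * nu) by (apply Rmult_le_compat_l; [repeat apply Rmult_le_pos; lra| lra]).
      unfold nu in H. field_simplify in H; [|repeat split; lra]. lra. }
    unfold r', r. nra. }
  split; auto. split; auto. split.
  { unfold ct. apply Rmult_lt_reg_r with al; [lra|].
    replace (c2 * sin al / al * al) with (c2 * sin al) by (field; lra).
    assert (al * al <= al) by nra.
    assert (c2 * (al - al * al * al / 6) <= c2 * sin al) by (apply Rmult_le_compat_l; lra).
    assert (al * al * al <= al * (3 * (c2 - c1) / c2)) by nra.
    assert (c2 * (al * (3 * (c2 - c1) / c2)) = 3 * al * (c2 - c1)) by (field; lra).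
    assert (c2 * (al * al * al) <= c2 * (al * (3 * (c2 - c1) / c2))) by (apply Rmult_le_compat_l; lra).
    assert (0 < al * (c2 - c1)) by (apply Rmult_lt_0_compat; unfold c2 in *; lra).
    lra. }
  split.
  { unfold ct. rewrite Hsh. field; lra. }
  split.
  { assert (Hct : ct <= c2).
    { unfold ct. apply Rmult_le_reg_r with al; [lra|].
      replace (c2 * sin al / al * al) with (c2 * sin al) by (field; lra). nra. }
    assert (lam * S * (1 - cos al) <= m').
    { assert (1 - cos al <= al * al / 2) by lra.
      assert (al * al <= al) by nra.
      assert (lam * S * al <= 2 * m').
      { apply Rmult_le_reg_r with (/ (lam * S)).
        - apply Rinv_0_lt_compat; nra.
        - replace (lam * S * al * / (lam * S)) with al by (field; nra).
          replace (2 * m' * / (lam * S)) with (2 * m' / (lam * S)) by (unfold Rdiv; ring). lra. }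
      assert (0 <= lam * S) by nra.
      nra. }
    fold S. unfold r', m in *. nra. }
  split.
  { unfold al0. split; [apply Rmin_pos; [lra| apply Rdiv_lt_0_compat; unfold r'; lra]| apply Rmin_l]. }
  { rewrite Ropp_0, exp_0.
    assert (Ha0 : 0 < al0 <= 1).
    { unfold al0. split; [apply Rmin_pos; [lra| apply Rdiv_lt_0_compat; unfold r'; lra]|].
      generalize (Rmin_l (al / 2) (r' / lam)); lra. }
    assert (Hc0 := cos_lb2 al0 ltac:(lra)).
    assert (al0 * al0 <= al0) by nra.
    assert (lam * al0 <= r').
    { assert (al0 <= r' / lam) by (unfold al0; apply Rmin_r).
      apply Rmult_le_compat_l with (r := lam) in H0; [|lra].
      replace (lam * (r' / lam)) with r' in H0 by (field; lra). lra. }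
    nra. }
Qed.

Lemma fin_min (I : Z -> R -> R) t : (forall k, 0 < I k t) ->
  forall N : nat, exists m, 0 < m /\ forall k, (Z.abs k <= Z.of_nat N)%Z -> m <= I k t.
Proof.
  intros Hp N. induction N as [|N [m [Hm HmI]]].
  - exists (I 0%Z t). split; auto. intros k Hk. assert (k = 0%Z) by lia. subst; lra.
  - exists (Rmin m (Rmin (I (Z.of_nat (S N)) t) (I (- Z.of_nat (S N))%Z t))).
    split. { apply Rmin_pos; auto. apply Rmin_pos; auto. }
    intros k Hk. destruct (Z_le_gt_dec (Z.abs k) (Z.of_nat N)).
    + eapply Rle_trans; [apply Rmin_l| auto].
    + destruct (Z_le_gt_dec 0 k).
      * assert (k = Z.of_nat (S N)) by lia. subst.
        eapply Rle_trans; [apply Rmin_r|]. apply Rmin_l.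
      * assert (k = (- Z.of_nat (S N))%Z) by lia. subst.
        eapply Rle_trans; [apply Rmin_r|]. apply Rmin_r.
Qed.

Lemma spread_right s0 tau eta lam I0 I cstar c1 :
  0 < s0 -> 0 < tau -> 0 < eta -> 0 < lam -> 1 < repr0 s0 tau eta ->
  ODE s0 tau eta lam I0 I ->
  (forall j, filterlim (I j) (at_right 0) (locally 0)) -> (forall j, I j 0 = 0) ->
  (forall T, exists M, forall j t, 0 <= t <= T -> Rabs (I j t) <= M) ->
  (forall j, 0 <= I0 j < 1) -> (exists j, 0 < I0 j) ->
  (forall g, 0 < g -> cstar <= cfun s0 tau eta lam g) -> 0 < c1 < cstar ->
  exists del T, 0 < del /\ forall t, T <= t -> forall j, 0 <= IZR j <= c1 * t -> del <= I j t.
Proof.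
  intros Hs Ht He Hl HR Hode Hc0 Hi Hb HI0 Hpos0 Hmin Hc1.
  assert (HI0' : forall j, 0 <= I0 j) by (intros; apply HI0).
  assert (Hnn := I_nonneg s0 tau eta lam I0 I Hs Ht He Hl Hode Hc0 Hi Hb HI0').
  assert (Hpos := I_pos s0 tau eta lam I0 I Hs Ht He Hl Hode Hnn HI0' Hpos0).
  destruct (spread_params s0 tau eta lam cstar c1 Hs Ht He Hl HR Hmin Hc1)
    as [r' [nu [gam [al [ct [al0 [Hr' [Hnu [Hf [Hgam [Hal [Hct [Hbal [HA [Hal0 HA0]]]]]]]]]]]]]]].
  assert (Hal0' : 0 < al0 <= 1) by lra.
  set (N0 := Z.to_nat (up (Lpi al0))).
  destruct (fin_min I 1 (fun k => Hpos k 1 ltac:(lra)) N0) as [m [Hm HmI]].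
  set (eps0 := Rmin nu m).
  assert (Heps0 : 0 < eps0) by (apply Rmin_pos; auto).
  assert (Hstat : forall k u, 0 <= u -> eps0 * bump 0 al0 (IZR k - 0 - 0 * u) <= I k (1 + u)).
  { apply (bump_sub s0 tau eta lam I0 I r' nu 0 al0 0 eps0 0 1); auto; try lra.
    - rewrite Ropp_0, exp_0. ring.
    - rewrite Rmult_0_l, exp_0, Rmult_1_r. apply Rmin_l.
    - intros k. destruct (Rlt_le_dec (Rabs (IZR k - 0)) (Lpi al0)) as [P|P].
      + assert (Hk : (Z.abs k <= Z.of_nat N0)%Z).
        { assert (IZR (Z.abs k) < IZR (up (Lpi al0))).
          { rewrite abs_IZR. destruct (archimed (Lpi al0)). rewrite Rminus_0_r in P. lra. }
          apply lt_IZR in H. unfold N0. lia. }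
        specialize (HmI k Hk).
        assert (bump 0 al0 (IZR k - 0) <= 1).
        { generalize (bump_le 0 al0 (IZR k - 0) ltac:(lra) ltac:(lra)). rewrite Rmult_0_l, exp_0. auto. }
        assert (eps0 <= m) by apply Rmin_r.
        generalize (bump_nn 0 al0 (IZR k - 0)). nra.
      + rewrite bump_out by lra. rewrite Rmult_0_r. apply Hnn. lra. }
  set (eps1 := eps0 / (2 * exp (gam * Lpi al))).
  assert (Hexp : 0 < exp (gam * Lpi al)) by apply exp_pos.
  assert (Heps1 : 0 < eps1) by (unfold eps1; apply Rdiv_lt_0_compat; lra).
  assert (Heps1' : eps1 * exp (gam * Lpi al) = eps0 / 2) by (unfold eps1; field; lra).
  assert (HL2 : 2 * Lpi al <= Lpi al0).
  { generalize (al_Lpi al ltac:(lra)) (al_Lpi al0 ltac:(lra)) (Lpi_pos al ltac:(lra)) (Lpi_pos al0 ltac:(lra)).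
    intros E1 E2 P1 P2.
    assert (Q1 : 2 * al0 * Lpi al <= al * Lpi al) by (apply Rmult_le_compat_r; lra).
    assert (Q2 : al0 * (2 * Lpi al) <= al0 * Lpi al0) by lra.
    apply Rmult_le_reg_l in Q2; lra. }
  assert (Hmove : forall s, 1 <= s -> forall k u, 0 <= u ->
            eps1 * bump gam al (IZR k - 0 - ct * u) <= I k (s + u)).
  { intros s Hs1. apply (bump_sub s0 tau eta lam I0 I r' nu gam al ct eps1 0 s); auto; try lra.
    - rewrite Heps1'. generalize (Rmin_l nu m). fold eps0. lra.
    - intros k. destruct (Rlt_le_dec (Rabs (IZR k - 0)) (Lpi al)) as [P|P].
      + generalize (Hstat k (s - 1) ltac:(lra)). replace (1 + (s - 1)) with s by ring.
        rewrite Rmult_0_l, Rminus_0_r. intro Hst.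
        destruct (bump_in 0 al0 (IZR k - 0) ltac:(lra) ltac:(generalize (Lpi_pos al ltac:(lra)); lra)) as [E _].
        rewrite E in Hst. rewrite !Rminus_0_r in Hst. rewrite Rmult_0_l, Ropp_0, exp_0, Rmult_1_l in Hst.
        assert (Hc : 1 / 2 <= cos (al0 * IZR k)).
        { rewrite Rminus_0_r in P. rewrite <- (cos_neg (al0 * IZR k)) in *.
          assert (Hy : Rabs (al0 * IZR k) <= PI / 4).
          { rewrite Rabs_mult, (Rabs_right al0) by lra.
            generalize (al_Lpi al ltac:(lra)). intro E1.
            assert (al0 * Rabs (IZR k) <= al / 2 * Lpi al) by (apply Rmult_le_compat; try lra; apply Rabs_pos).
            lra. }
          generalize PI_4. intro.
          unfold Rabs in Hy. destruct Rcase_abs.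
          - generalize (cos_lb2 (- (al0 * IZR k)) ltac:(lra)). nra.
          - rewrite cos_neg. generalize (cos_lb2 (al0 * IZR k) ltac:(lra)). nra. }
        generalize (bump_le gam al (IZR k - 0) ltac:(lra) ltac:(lra)) (bump_nn gam al (IZR k - 0)). intros.
        assert (eps1 * bump gam al (IZR k - 0) <= eps1 * exp (gam * Lpi al)) by (apply Rmult_le_compat_l; lra).
        nra.
      + rewrite bump_out by lra. rewrite Rmult_0_r. apply Hnn. lra. }
  exists eps1, (ct / (ct - c1) + 1). split; auto.
  intros t Ht' j Hj.
  assert (Hct0 : 0 < ct) by lra.
  set (u := IZR j / ct).
  assert (Hu : 0 <= u) by (unfold u; apply Rdiv_le_0_compat; lra).
  assert (Hs1 : 1 <= t - u).
  { unfold u. assert (IZR j / ct <= c1 * t / ct) by (apply Rmult_le_compat_r; [left; apply Rinv_0_lt_compat; lra| lra]).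
    assert (ct / (ct - c1) * (ct - c1) = ct) by (field; lra).
    assert (1 * ct <= (t - c1 * t / ct) * ct).
    { replace ((t - c1 * t / ct) * ct) with (t * (ct - c1)) by (field; lra).
      assert (ct / (ct - c1) * (ct - c1) <= (t - 1) * (ct - c1)) by (apply Rmult_le_compat_r; lra).
      nra. }
    apply Rmult_le_reg_r in H1; lra. }
  generalize (Hmove (t - u) Hs1 j u Hu). replace (t - u + u) with t by ring.
  replace (IZR j - 0 - ct * u) with 0 by (unfold u; field; lra).
  rewrite bump0 by lra. lra.
Qed.

Lemma spread_both s0 tau eta lam I0 I cstar c1 :
  0 < s0 -> 0 < tau -> 0 < eta -> 0 < lam -> 1 < repr0 s0 tau eta ->
  ODE s0 tau eta lam I0 I ->
  (forall j, filterlim (I j) (at_right 0) (locally 0)) -> (forall j, I j 0 = 0) ->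
  (forall T, exists M, forall j t, 0 <= t <= T -> Rabs (I j t) <= M) ->
  (forall j, 0 <= I0 j < 1) -> (exists j, 0 < I0 j) ->
  (forall g, 0 < g -> cstar <= cfun s0 tau eta lam g) -> 0 < c1 < cstar ->
  exists del T, 0 < del /\ forall t, T <= t -> forall j, IZR (Z.abs j) <= c1 * t -> del <= I j t.
Proof.
  intros Hs Ht He Hl HR Hode Hc0 Hi Hb HI0 [jp Hjp] Hmin Hc1.
  destruct (spread_right s0 tau eta lam I0 I cstar c1 Hs Ht He Hl HR Hode Hc0 Hi Hb HI0
     (ex_intro _ jp Hjp) Hmin Hc1) as [d1 [T1 [Hd1 H1]]].
  set (I' := fun j t => I (- j)%Z t).
  assert (Hode' := ODE_refl s0 tau eta lam I0 I Hode).
  assert (Hc0' : forall j, filterlim (I' j) (at_right 0) (locally 0)) by (intros; apply Hc0).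
  assert (Hi' : forall j, I' j 0 = 0) by (intros; apply Hi).
  assert (Hb' : forall T, exists M, forall j t, 0 <= t <= T -> Rabs (I' j t) <= M).
  { intros T. destruct (Hb T) as [M HM]. exists M. intros; apply HM; auto. }
  assert (HI0' : forall j, 0 <= (fun j => I0 (- j)%Z) j < 1) by (intros; apply HI0).
  assert (Hp' : exists j, 0 < (fun j => I0 (- j)%Z) j).
  { exists (- jp)%Z. simpl. rewrite Z.opp_involutive. auto. }
  destruct (spread_right s0 tau eta lam _ I' cstar c1 Hs Ht He Hl HR Hode' Hc0' Hi' Hb' HI0'
     Hp' Hmin Hc1) as [d2 [T2 [Hd2 H2]]].
  exists (Rmin d1 d2), (Rmax T1 T2). split; [apply Rmin_pos; auto|].
  intros t Htt j Hj.
  destruct (Z_le_gt_dec 0 j).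
  - eapply Rle_trans; [apply Rmin_l|]. apply H1; [generalize (Rmax_l T1 T2); lra|].
    split; [apply IZR_le; lia|]. replace (IZR j) with (IZR (Z.abs j)) by (f_equal; lia). auto.
  - eapply Rle_trans; [apply Rmin_r|].
    generalize (H2 t ltac:(generalize (Rmax_r T1 T2); lra) (- j)%Z). unfold I'. rewrite Z.opp_involutive.
    intro HH. apply HH. split; [apply IZR_le; lia|]. replace (IZR (- j)) with (IZR (Z.abs j)) by (f_equal; lia). auto.
Qed.

Lemma part1 s0 tau eta lam I0 I cstar V :
  0 < s0 -> 0 < tau -> 0 < eta -> 0 < lam -> 1 < repr0 s0 tau eta ->
  ODE s0 tau eta lam I0 I ->
  (forall j, filterlim (I j) (at_right 0) (locally 0)) -> (forall j, I j 0 = 0) ->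
  (forall T, exists M, forall j t, 0 <= t <= T -> Rabs (I j t) <= M) ->
  (forall j, 0 <= I0 j < 1) -> (exists j, 0 < I0 j) ->
  (forall g, 0 < g -> cstar <= cfun s0 tau eta lam g) ->
  (forall j, 0 < V j) -> (exists M, forall j, Rabs (V j) <= M) ->
  (forall j, 0 = freac s0 tau eta (V j) + I0 j + lam * dlap V j) ->
  forall c : R, 0 < c < cstar ->
     forall eps : R, 0 < eps -> exists T : R, forall t : R, T <= t ->
       forall j : Z, IZR (Z.abs j) <= c * t -> Rabs (I j t - V j) <= eps.
Proof.
  intros Hs Ht He Hl HR Hode Hc0 Hi Hb HI0 Hp Hmin HV [MV HMV] HVe c Hc eps Heps.
  set (c1 := (c + cstar) / 2).
  assert (HI0' : forall j, 0 <= I0 j) by (intros; apply HI0).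
  assert (Hnn := I_nonneg s0 tau eta lam I0 I Hs Ht He Hl Hode Hc0 Hi Hb HI0').
  assert (HIV := I_le_V s0 tau eta lam I0 I V Hs Ht He Hl Hode Hc0 Hi Hb HV HVe).
  destruct (spread_both s0 tau eta lam I0 I cstar c1 Hs Ht He Hl HR Hode Hc0 Hi Hb HI0 Hp Hmin
    ltac:(unfold c1; lra)) as [del [T1 [Hdel Hsp]]].
  set (Tm := Rmax T1 0).
  assert (HVd : forall j, del <= V j <= MV).
  { intros j. split; [|generalize (HMV j); intro Q; apply Rabs_def2b in Q; lra].
    set (t := Rmax Tm (IZR (Z.abs j) / c1)).
    assert (Hc1 : 0 < c1) by (unfold c1; lra).
    assert (Ht1 : T1 <= t) by (unfold t, Tm; generalize (Rmax_l T1 0) (Rmax_l (Rmax T1 0) (IZR (Z.abs j) / c1)); lra).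
    assert (Ht0 : 0 <= t) by (unfold t, Tm; generalize (Rmax_r T1 0) (Rmax_l (Rmax T1 0) (IZR (Z.abs j) / c1)); lra).
    assert (Hj : IZR (Z.abs j) <= c1 * t).
    { assert (IZR (Z.abs j) / c1 <= t) by (unfold t; apply Rmax_r).
      assert (IZR (Z.abs j) / c1 * c1 = IZR (Z.abs j)) by (field; lra).
      assert (IZR (Z.abs j) / c1 * c1 <= t * c1) by (apply Rmult_le_compat_r; lra). lra. }
    generalize (Hsp t Ht1 j Hj) (HIV j t Ht0). lra. }
  destruct (local_conv s0 tau eta lam I0 I V del MV eps Hs Ht He Hl Hode Hnn HI0' HVe Hdel HVd Heps)
    as [tau0 [R [Htau0 Hloc]]].
  exists (Rmax (Tm + tau0 + 1) ((R + c1 * tau0) / (c1 - c))).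
  intros t Htt j Hj.
  assert (Hc1c : 0 < c1 - c) by (unfold c1; lra).
  assert (Ht1 : Tm + tau0 + 1 <= t) by (generalize (Rmax_l (Tm + tau0 + 1) ((R + c1 * tau0) / (c1 - c))); lra).
  assert (Ht2 : (R + c1 * tau0) / (c1 - c) <= t) by (generalize (Rmax_r (Tm + tau0 + 1) ((R + c1 * tau0) / (c1 - c))); lra).
  assert (HTm : T1 <= Tm /\ 0 <= Tm) by (unfold Tm; split; [apply Rmax_l| apply Rmax_r]).
  set (s := t - tau0).
  assert (Hlow : V j - eps <= I j (s + tau0)).
  { apply Hloc; [unfold s; lra|].
    intros k Hk. apply Hsp; [unfold s; lra|].
    assert (IZR (Z.abs k) <= IZR (Z.abs j) + IZR (Z.abs (k - j))).
    { rewrite <- plus_IZR. apply IZR_le. lia. }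
    assert (R + c1 * tau0 <= t * (c1 - c)).
    { assert ((R + c1 * tau0) / (c1 - c) * (c1 - c) = R + c1 * tau0) by (field; lra).
      assert ((R + c1 * tau0) / (c1 - c) * (c1 - c) <= t * (c1 - c)) by (apply Rmult_le_compat_r; lra). lra. }
    unfold s. nra. }
  unfold s in Hlow. replace (t - tau0 + tau0) with t in Hlow by ring.
  generalize (HIV j t ltac:(lra)). intro.
  unfold Rabs. destruct Rcase_abs; lra.
Qed.

Theorem theorem3
  (s0 tau eta lam : R) (I0 : Z -> R) (cstar : R)
  (Iinf : Z -> R) (I : Z -> R -> R)
  (Hs0 : 0 < s0 < 1) (Htau : 0 < tau) (Heta : 0 < eta) (Hlam : 0 < lam)
  (HI0supp : exists N : Z, forall j : Z, (N < Z.abs j)%Z -> I0 j = 0)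
  (HI0range : forall j : Z, 0 <= I0 j < 1)
  (HI0pos : exists j : Z, 0 < I0 j)
  (HR0 : 1 < repr0 s0 tau eta)
  (Hcstar : is_min_pos (cfun s0 tau eta lam) cstar)
  (HIinf_pos : forall j : Z, 0 < Iinf j)
  (HIinf_bdd : exists M : R, forall j : Z, Rabs (Iinf j) <= M)
  (HIinf_eq : forall j : Z,
      0 = freac s0 tau eta (Iinf j) + I0 j + lam * dlap Iinf j)
  (HI_ode : forall (j : Z) (t : R), 0 < t ->
      is_derive (I j) t
        (freac s0 tau eta (I j t) + I0 j + lam * dlap (fun k => I k t) j))
  (HI_init : forall j : Z, I j 0 = 0)
  (HI_cont0 : forall j : Z, filterlim (I j) (at_right 0) (locally 0))
  (HI_bdd : forall T : R, exists M : R,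
      forall (j : Z) (t : R), 0 <= t <= T -> Rabs (I j t) <= M) :
  0 < cstar /\
  (forall c : R, 0 < c < cstar ->
     forall eps : R, 0 < eps -> exists T : R, forall t : R, T <= t ->
       forall j : Z, IZR (Z.abs j) <= c * t -> Rabs (I j t - Iinf j) <= eps) /\
  (forall c : R, cstar < c ->
     forall eps : R, 0 < eps -> exists T : R, forall t : R, T <= t ->
       forall j : Z, c * t <= IZR (Z.abs j) -> Rabs (I j t) <= eps).
Proof.
  destruct Hcstar as [[g0 [Hg0 Hcs]] Hmin].
  destruct HI0supp as [N HN].
  assert (Hs : 0 < s0) by lra.
  split; [rewrite <- Hcs; apply cfun_pos; auto|].
  split.
  - apply (part1 s0 tau eta lam I0 I cstar Iinf Hs Htau Heta Hlam HR0 HI_ode HI_cont0 HI_init HI_bdd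
      HI0range HI0pos Hmin HIinf_pos HIinf_bdd HIinf_eq).
  - apply (part2 s0 tau eta lam I0 I cstar N Hs Htau Heta Hlam HR0 HI_ode HI_cont0 HI_init HI_bdd
      HN HI0range (ex_intro _ g0 (conj Hg0 Hcs))).
Qed.
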